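(* In Case II, the potentials $u_t$ satisfy, for all $\rho\in\mathbb R$, $t\in[0,T)$: (1) $(n-k)(T-t)<u_t'(\rho)<(n+k)(T-t)$; (2) $\lim_{t\to T}u_t(\rho)=0$; (3) there is $C>0$ with $C^{-1}\frac{e^{k\rho}}{(1+e^{k\rho})^2}(T-t)<u_t''(\rho)\leqslant C\frac{e^{k\rho}}{(1+e^{k\rho})^2}(T-t)$ and $\frac{|u_t'''(\rho)|}{u_t''(\rho)}\leqslant C$.
   Context: Setting: $X=X_{n,k}$ with $1\leqslant k\leqslant n-1$, coordinates $x\in\mathbb C^n\setminus\{0\}$ on $X\setminus(D_0\cup D_\infty)$, $\rho=\log\sum|x_i|^2$. $\omega(t)$ solves $\omega(t)=\omega_0-t\,\mathrm{Ric}(\omega(t))$, $\omega(0)=\omega_0$, with $\omega_0$ Calabi symmetric; $\omega(t)=\sqrt{-1}\partial\bar\partial u_t(\rho)$, $u_t'>0$, $u_t''>0$, $u_t(0)=0$, $\lim_{\rho\to-\infty}u_t'=a_t=a_0+(k-n)t$, $\lim_{\rho\to\infty}u_t'=b_t=b_0-(k+n)t$, $0<a_0<b_0$. Case II: $a_0(n+k)=b_0(n-k)$, $T=\frac{a_0}{n-k}$, so $a_t=(n-k)(T-t)$, $b_t=(n+k)(T-t)$. *)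

(* Defs.v *)
From Stdlib Require Import Reals.
From Coquelicot Require Import Coquelicot.
Open Scope R_scope.

Definition smooth (f : R -> R) : Prop := forall (m : nat) (x : R), ex_derive_n f m x.

(* A Calabi-symmetric potential u(rho) on X_{n,k} \ (D_0 u D_oo) of a Kähler
   metric omega = i dd^c u(rho) that extends smoothly to X_{n,k}, with
   lim_{-oo} u' = a, lim_{+oo} u' = b, normalized by u(0) = 0.
   Smooth extension across D_0, D_oo is expressed (Calabi / Hwang–Singer) via
   the momentum profile phi(u'(rho)) = u''(rho), phi smooth on [a,b],
   phi(a) = phi(b) = 0, phi'(a) = k, phi'(b) = -k. *)
Definition calabi_potential (n k : nat) (a b : R) (f : R -> R) : Prop :=
  smooth f /\ f 0 = 0 /\
  (forall r, 0 < Derive f r) /\ (forall r, 0 < Derive_n f 2 r) /\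
  filterlim (Derive f) (Rbar_locally m_infty) (locally a) /\
  filterlim (Derive f) (Rbar_locally p_infty) (locally b) /\
  exists phi : R -> R, smooth phi /\ phi a = 0 /\ phi b = 0 /\
    Derive phi a = INR k /\ Derive phi b = - INR k /\
    forall r, phi (Derive f r) = Derive_n f 2 r.

(* omega(t) = omega_0 - t Ric(omega(t)) for omega = i dd^c u(rho).
   In the x coordinates det g = (u')^{n-1} u'' e^{-n rho}, so
   Ric(omega_t) = i dd^c (n rho - log((u_t')^{n-1} u_t'')); for n >= 2, a radial
   function F(rho) has i dd^c F = 0 iff F is constant. *)
Definition continuity_eq (n : nat) (u0 ut : R -> R) (t : R) : Prop :=
  exists c : R, forall r,
    ut r - u0 r + t * INR n * r - t * ln ((Derive ut r) ^ (n - 1) * Derive_n ut 2 r) = c.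

(* Main.v *)
Require Import Defs.
From Stdlib Require Import Reals Lra Psatz Lia.
From Coquelicot Require Import Coquelicot.
Open Scope R_scope.


Lemma exd_cont (f : R -> R) (x : R) : ex_derive f x -> continuity_pt f x.
Proof. intro H. apply continuity_pt_filterlim. exact (ex_derive_continuous f x H). Qed.

Lemma cont_nbhd (g : R -> R) (c eps : R) : ex_derive g c -> 0 < eps ->
  exists d, 0 < d /\ forall x, Rabs (x - c) < d -> Rabs (g x - g c) < eps.
Proof.
  intros H He. pose proof (ex_derive_continuous g c H) as H0. clear H. rename H0 into H.
  destruct (proj1 (filterlim_locally g (g c)) H (mkposreal eps He)) as [d Hd].
  exists d; split; [apply cond_pos|]. intros x Hx; apply Hd; exact Hx.
Qed.

Lemma abs_le x y : Rabs x <= y -> -y <= x <= y.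
Proof. unfold Rabs; destruct (Rcase_abs x); lra. Qed.
Lemma abs_lt x y : Rabs x < y -> -y < x < y.
Proof. unfold Rabs; destruct (Rcase_abs x); lra. Qed.
Lemma lt_abs x y : -y < x < y -> Rabs x < y.
Proof. unfold Rabs; destruct (Rcase_abs x); lra. Qed.
Lemma le_abs x y : -y <= x <= y -> Rabs x <= y.
Proof. unfold Rabs; destruct (Rcase_abs x); lra. Qed.

Lemma mvt (f : R -> R) a b : a < b -> (forall z, a <= z <= b -> ex_derive f z) ->
  exists c, a <= c <= b /\ f b - f a = Derive f c * (b - a).
Proof.
  intros Hab Hd. destruct (MVT_gen f a b (Derive f)) as [c [Hc E]].
  - intros x Hx. rewrite Rmin_left in Hx by lra. rewrite Rmax_right in Hx by lra.
    apply Derive_correct, Hd; lra.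
  - intros x Hx. rewrite Rmin_left in Hx by lra. rewrite Rmax_right in Hx by lra.
    apply exd_cont, Hd; lra.
  - exists c. rewrite Rmin_left in Hc by lra. rewrite Rmax_right in Hc by lra. auto.
Qed.

Lemma mono (f : R -> R) a b : a <= b -> (forall z, a <= z <= b -> ex_derive f z) ->
  (forall z, a <= z <= b -> 0 <= Derive f z) -> f a <= f b.
Proof.
  intros Hab Hd Hp. destruct (Req_dec a b) as [->|Hne]; [lra|].
  destruct (mvt f a b) as [c [Hc E]]; [lra|auto|]. specialize (Hp c Hc). nra.
Qed.

Lemma smono (f : R -> R) a b : a < b -> (forall z, a <= z <= b -> ex_derive f z) ->
  (forall z, a <= z <= b -> 0 < Derive f z) -> f a < f b.
Proof.
  intros Hab Hd Hp. destruct (mvt f a b) as [c [Hc E]]; [lra|auto|]. specialize (Hp c Hc). nra.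
Qed.

Lemma santi (f : R -> R) a b : a < b -> (forall z, a <= z <= b -> ex_derive f z) ->
  (forall z, a <= z <= b -> Derive f z < 0) -> f b < f a.
Proof.
  intros Hab Hd Hp. destruct (mvt f a b) as [c [Hc E]]; [lra|auto|]. specialize (Hp c Hc). nra.
Qed.

Lemma dom_int (h q : R -> R) a b : a <= b ->
  (forall z, a <= z <= b -> ex_derive h z /\ ex_derive q z /\ Rabs (Derive h z) <= Derive q z) ->
  Rabs (h b - h a) <= q b - q a.
Proof.
  intros Hab H.
  assert (H1 : (fun z => q z - h z) a <= (fun z => q z - h z) b).
  { apply (mono (fun z => q z - h z)); auto.
    - intros z Hz. destruct (H z Hz) as [? [? ?]]. auto_derive; repeat split; auto.
    - intros z Hz. destruct (H z Hz) as [? [? Hb]]. rewrite Derive_minus by auto.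
      apply abs_le in Hb. lra. }
  assert (H2 : (fun z => q z + h z) a <= (fun z => q z + h z) b).
  { apply (mono (fun z => q z + h z)); auto.
    - intros z Hz. destruct (H z Hz) as [? [? ?]]. auto_derive; repeat split; auto.
    - intros z Hz. destruct (H z Hz) as [? [? Hb]]. rewrite Derive_plus by auto.
      apply abs_le in Hb. lra. }
  simpl in *. apply le_abs. lra.
Qed.

Lemma dom_all (h q : R -> R) :
  (forall z, ex_derive h z /\ ex_derive q z /\ Rabs (Derive h z) <= Derive q z) ->
  forall x y, Rabs (h x - h y) <= Rabs (q x - q y).
Proof.
  intros H x y. destruct (Rle_dec y x) as [Hl|Hl].
  - pose proof (dom_int h q y x Hl (fun z _ => H z)) as D.
    rewrite (Rabs_right (q x - q y)); [lra|]. pose proof (Rabs_pos (h x - h y)). lra.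
  - pose proof (dom_int h q x y ltac:(lra) (fun z _ => H z)) as D.
    rewrite Rabs_minus_sym, (Rabs_minus_sym (q x)).
    rewrite (Rabs_right (q y - q x)); [lra|]. pose proof (Rabs_pos (h y - h x)). lra.
Qed.

Lemma lim_m (y : R -> R) a : filterlim y (Rbar_locally m_infty) (locally a) ->
  forall eps, 0 < eps -> exists M, forall x, x < M -> Rabs (y x - a) < eps.
Proof.
  intros H eps He. destruct (proj1 (filterlim_locally y a) H (mkposreal eps He)) as [M HM].
  exists M. intros x Hx; apply HM; auto.
Qed.
Lemma lim_p (y : R -> R) a : filterlim y (Rbar_locally p_infty) (locally a) ->
  forall eps, 0 < eps -> exists M, forall x, M < x -> Rabs (y x - a) < eps.
Proof.
  intros H eps He. destruct (proj1 (filterlim_locally y a) H (mkposreal eps He)) as [M HM].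
  exists M. intros x Hx; apply HM; auto.
Qed.

Lemma between (y : R -> R) a b : (forall r, ex_derive y r) -> (forall r, 0 < Derive y r) ->
  filterlim y (Rbar_locally m_infty) (locally a) ->
  filterlim y (Rbar_locally p_infty) (locally b) -> forall r, a < y r < b.
Proof.
  intros Hd Hp Ha Hb r. split.
  - assert (E1 : y (r-1) < y r) by (apply smono; auto; lra).
    destruct (Rlt_dec a (y r)) as [?|Hn]; auto. exfalso.
    destruct (lim_m y a Ha (y r - y (r-1))) as [M HM]; [lra|].
    set (x := Rmin M (r-1) - 1).
    assert (x < M) by (unfold x; pose proof (Rmin_l M (r-1)); lra).
    assert (y x < y (r-1)) by (apply smono; auto; unfold x; pose proof (Rmin_r M (r-1)); lra).
    specialize (HM x H). apply Rlt_le, abs_le in HM; lra.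
  - assert (E1 : y r < y (r+1)) by (apply smono; auto; lra).
    destruct (Rlt_dec (y r) b) as [?|Hn]; auto. exfalso.
    destruct (lim_p y b Hb (y (r+1) - y r)) as [M HM]; [lra|].
    set (x := Rmax M (r+1) + 1).
    assert (M < x) by (unfold x; pose proof (Rmax_l M (r+1)); lra).
    assert (y (r+1) < y x) by (apply smono; auto; unfold x; pose proof (Rmax_r M (r+1)); lra).
    specialize (HM x H). apply Rlt_le, abs_le in HM; lra.
Qed.

Lemma max_conds (f : R -> R) (c : R) : (forall z, ex_derive f z) -> (forall z, ex_derive (Derive f) z) ->
  ex_derive (Derive (Derive f)) c ->
  (forall z, f z <= f c) -> Derive f c = 0 /\ Derive (Derive f) c <= 0.
Proof.
  intros H1 H2 H3 Hm.
  assert (D1 : Derive f c = 0).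
  { destruct (Rtotal_order (Derive f c) 0) as [Hn|[Hz|Hp]]; auto; exfalso.
    - destruct (cont_nbhd (Derive f) c (- Derive f c) (H2 c)) as [d [Hd Hn2]]; [lra|].
      assert (f c < f (c - d/2)).
      { apply santi; [lra|auto|]. intros z Hz. specialize (Hn2 z).
        assert (Ha : Rabs (Derive f z - Derive f c) < - Derive f c) by (apply Hn2; apply lt_abs; split; lra).
        apply abs_lt in Ha; lra. }
      specialize (Hm (c - d/2)); lra.
    - destruct (cont_nbhd (Derive f) c (Derive f c) (H2 c)) as [d [Hd Hn2]]; [lra|].
      assert (f c < f (c + d/2)).
      { apply smono; [lra|auto|]. intros z Hz. specialize (Hn2 z).
        assert (Ha : Rabs (Derive f z - Derive f c) < Derive f c) by (apply Hn2; apply lt_abs; split; lra).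
        apply abs_lt in Ha; lra. }
      specialize (Hm (c + d/2)); lra. }
  split; auto.
  destruct (Rle_dec (Derive (Derive f) c) 0) as [?|Hp]; auto. exfalso.
  destruct (cont_nbhd (Derive (Derive f)) c (Derive (Derive f) c) H3) as [d [Hd Hn2]]; [lra|].
  assert (P2 : forall z, Rabs (z - c) < d -> 0 < Derive (Derive f) z).
  { intros z Hz. specialize (Hn2 z Hz). apply abs_lt in Hn2. lra. }
  assert (P1 : forall z, c < z <= c + d/2 -> 0 < Derive f z).
  { intros z Hz. rewrite <- D1. apply smono; [lra|auto|]. intros w Hw. apply P2. apply lt_abs; split; lra. }
  assert (f (c + d/4) < f (c + d/2)).
  { apply smono; [lra|auto|]. intros z Hz. apply P1. lra. }
  assert (f c <= f (c + d/4)).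
  { apply mono; [lra|auto|]. intros z Hz. destruct (Req_dec z c) as [->|]. lra.
    apply Rlt_le, P1; lra. }
  specialize (Hm (c + d/2)). lra.
Qed.

Lemma min_conds (f : R -> R) (c : R) : (forall z, ex_derive f z) -> (forall z, ex_derive (Derive f) z) ->
  ex_derive (Derive (Derive f)) c ->
  (forall z, f c <= f z) -> Derive f c = 0 /\ 0 <= Derive (Derive f) c.
Proof.
  intros H1 H2 H3 Hm.
  assert (E1 : forall z, Derive (fun x => - f x) z = - Derive f z) by (intro; apply Derive_opp).
  assert (E2 : forall z, Derive (Derive (fun x => - f x)) z = - Derive (Derive f) z).
  { intro z. rewrite (Derive_ext _ _ z E1). apply Derive_opp. }
  destruct (max_conds (fun x => - f x) c) as [A B].
  - intro z. auto_derive; auto.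
  - intro z. apply (ex_derive_ext (fun x => - Derive f x)); [intro; symmetry; apply E1|].
    auto_derive; auto.
  - apply (ex_derive_ext (fun x => - Derive (Derive f) x)); [intro; symmetry; apply E2|].
    auto_derive; auto.
  - intro z. specialize (Hm z). lra.
  - rewrite E1 in A. rewrite E2 in B. split; lra.
Qed.

Lemma exists_max_val (g : R -> R) x0 : (forall z, continuity_pt g z) ->
  (exists M1, forall x, x <= M1 -> g x < g x0) -> (exists M2, forall x, M2 <= x -> g x < g x0) ->
  exists c, forall x, g x <= g c.
Proof.
  intros Hc [M1 H1] [M2 H2].
  destruct (continuity_ab_maj g (Rmin M1 x0) (Rmax M2 x0)) as [c [Hc1 Hc2]].
  - pose proof (Rmin_r M1 x0); pose proof (Rmax_r M2 x0); lra.
  - intros; auto.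
  - exists c. assert (g x0 <= g c) by (apply Hc1; split; [apply Rmin_r|apply Rmax_r]).
    intro x. destruct (Rle_dec x M1). specialize (H1 x r); lra.
    destruct (Rle_dec M2 x). specialize (H2 x r); lra.
    apply Hc1. split. pose proof (Rmin_l M1 x0); lra. pose proof (Rmax_l M2 x0); lra.
Qed.

Lemma exists_max_der (g : R -> R) : (forall z, ex_derive g z) ->
  (exists M1, forall x, x <= M1 -> 0 < Derive g x) -> (exists M2, forall x, M2 <= x -> Derive g x < 0) ->
  exists c, forall x, g x <= g c.
Proof.
  intros Hd [M1 H1] [M2 H2].
  assert (M1 < M2).
  { destruct (Rlt_dec M1 M2); auto. specialize (H1 M2 ltac:(lra)). specialize (H2 M2 ltac:(lra)). lra. }
  destruct (continuity_ab_maj g M1 M2) as [c [Hc1 Hc2]]; [lra| intros; apply exd_cont; auto|].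
  exists c. intro x. destruct (Rle_dec x M1).
  - destruct (Req_dec x M1) as [->|]. apply Hc1; lra.
    assert (g x < g M1) by (apply smono; [lra|auto|intros; apply H1; lra]).
    assert (g M1 <= g c) by (apply Hc1; lra). lra.
  - destruct (Rle_dec M2 x).
    + destruct (Req_dec x M2) as [->|]. apply Hc1; lra.
      assert (g x < g M2) by (apply santi; [lra|auto|intros; apply H2; lra]).
      assert (g M2 <= g c) by (apply Hc1; lra). lra.
    + apply Hc1; lra.
Qed.


Lemma tay1 (h : R -> R) a b L : a <= b ->
  (forall z, a <= z <= b -> ex_derive h z /\ Rabs (Derive h z) <= L) -> h a = 0 ->
  forall x, a <= x <= b -> Rabs (h x) <= L * (x - a).
Proof.
  intros Hab H Ha x Hx.
  pose proof (dom_int h (fun z => L * z) a x ltac:(lra)) as D.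
  rewrite Ha, Rminus_0_r in D. simpl in D. replace (L * (x - a)) with (L * x - L * a) by ring.
  apply D. intros z Hz. destruct (H z ltac:(lra)) as [H1 H2]. split; auto. split.
  - auto_derive; auto.
  - rewrite Derive_scal, Derive_id. lra.
Qed.

Lemma tay1r (h : R -> R) a b L : a <= b ->
  (forall z, a <= z <= b -> ex_derive h z /\ Rabs (Derive h z) <= L) -> h b = 0 ->
  forall x, a <= x <= b -> Rabs (h x) <= L * (b - x).
Proof.
  intros Hab H Hb x Hx.
  pose proof (dom_int h (fun z => L * z) x b ltac:(lra)) as D.
  rewrite Hb, Rminus_0_l, Rabs_Ropp in D. simpl in D. replace (L * (b - x)) with (L * b - L * x) by ring.
  apply D. intros z Hz. destruct (H z ltac:(lra)) as [H1 H2]. split; auto. split.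
  - auto_derive; auto.
  - rewrite Derive_scal, Derive_id. lra.
Qed.

Lemma tay2 (h : R -> R) a b H : a <= b ->
  (forall z, a <= z <= b -> ex_derive h z /\ ex_derive (Derive h) z /\ Rabs (Derive (Derive h) z) <= H) ->
  h a = 0 -> Derive h a = 0 ->
  forall x, a <= x <= b -> Rabs (h x) <= H / 2 * (x - a) ^ 2.
Proof.
  intros Hab Hd Ha Hda x Hx.
  assert (B1 : forall z, a <= z <= b -> Rabs (Derive h z) <= H * (z - a)).
  { apply tay1; auto. intros z Hz. destruct (Hd z Hz) as [? [? ?]]; auto. }
  pose proof (dom_int h (fun z => H / 2 * (z - a) ^ 2) a x ltac:(lra)) as D.
  rewrite Ha, Rminus_0_r in D. simpl in D.
  replace (H / 2 * (x - a) ^ 2) with (H / 2 * ((x - a) * ((x - a) * 1)) - H / 2 * ((a - a) * ((a - a) * 1))) by ring.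
  apply D. intros z Hz. destruct (Hd z ltac:(lra)) as [H1 [H2 H3]]. split; auto. split.
  - auto_derive; auto.
  - assert (E : Derive (fun z0 : R => H / 2 * ((z0 - a) * ((z0 - a) * 1))) z = H * (z - a))
      by (apply is_derive_unique; auto_derive; auto; field).
    rewrite E. apply B1; lra.
Qed.

Lemma tay2r (h : R -> R) a b H : a <= b ->
  (forall z, a <= z <= b -> ex_derive h z /\ ex_derive (Derive h) z /\ Rabs (Derive (Derive h) z) <= H) ->
  h b = 0 -> Derive h b = 0 ->
  forall x, a <= x <= b -> Rabs (h x) <= H / 2 * (b - x) ^ 2.
Proof.
  intros Hab Hd Hb Hdb x Hx.
  assert (B1 : forall z, a <= z <= b -> Rabs (Derive h z) <= H * (b - z)).
  { apply tay1r; auto. intros z Hz. destruct (Hd z Hz) as [? [? ?]]; auto. }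
  pose proof (dom_int h (fun z => - (H / 2 * (b - z) ^ 2)) x b ltac:(lra)) as D.
  rewrite Hb, Rminus_0_l, Rabs_Ropp in D. simpl in D.
  replace (H / 2 * (b - x) ^ 2) with (- (H / 2 * ((b - b) * ((b - b) * 1))) - - (H / 2 * ((b - x) * ((b - x) * 1)))) by ring.
  apply D. intros z Hz. destruct (Hd z ltac:(lra)) as [H1 [H2 H3]]. split; auto. split.
  - auto_derive; auto.
  - assert (E : Derive (fun z0 : R => - (H / 2 * ((b - z0) * ((b - z0) * 1)))) z = H * (b - z))
      by (apply is_derive_unique; auto_derive; auto; field).
    rewrite E. apply B1; lra.
Qed.

Lemma min1 X c u v : 0 <= u -> 0 <= v -> 0 < u + v -> 0 <= c ->
  X <= c * u -> X <= c * v -> X <= c * (2 * u * v / (u + v)).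
Proof.
  intros. assert (Hw : 2 * u * v / (u + v) * (u + v) = 2 * u * v) by (field; repeat split; intro; nra).
  destruct (Rle_dec u v).
  - assert (u <= 2 * u * v / (u + v)).
    { apply (Rmult_le_reg_r (u+v)); auto. rewrite Hw. nra. }
    nra.
  - assert (v <= 2 * u * v / (u + v)).
    { apply (Rmult_le_reg_r (u+v)); auto. rewrite Hw. nra. }
    nra.
Qed.

Lemma minsq X c u v : 0 <= u -> 0 <= v -> 0 < u + v -> 0 <= c ->
  X <= c * u ^ 2 -> X <= c * v ^ 2 -> X <= c * (4 * u ^ 2 * v ^ 2 / (u + v) ^ 2).
Proof.
  intros. assert (Hw : 4 * u ^ 2 * v ^ 2 / (u + v) ^ 2 * (u + v) ^ 2 = 4 * u ^ 2 * v ^ 2) by (field; repeat split; intro; nra).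
  destruct (Rle_dec u v).
  - assert (u ^ 2 <= 4 * u ^ 2 * v ^ 2 / (u + v) ^ 2).
    { apply (Rmult_le_reg_r ((u+v)^2)); [nra|]. rewrite Hw.
      assert ((u+v)^2 <= 4 * v^2) by nra. assert (0 <= u^2) by nra. nra. }
    nra.
  - assert (v ^ 2 <= 4 * u ^ 2 * v ^ 2 / (u + v) ^ 2).
    { apply (Rmult_le_reg_r ((u+v)^2)); [nra|]. rewrite Hw.
      assert ((u+v)^2 <= 4 * u^2) by nra. assert (0 <= v^2) by nra. nra. }
    nra.
Qed.

Definition G x := exp x / (1 + exp x) ^ 2.

Lemma G_pos x : 0 < G x.
Proof. unfold G. pose proof (exp_pos x). apply Rdiv_lt_0_compat; nra. Qed.

Lemma G_le x : G x <= / 4.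
Proof.
  unfold G. pose proof (exp_pos x). set (E := exp x) in *.
  apply (Rmult_le_reg_r ((1+E)^2)); [nra|].
  replace (E / (1 + E) ^ 2 * (1 + E) ^ 2) with E by (field; repeat split; intro; nra). pose proof (pow2_ge_0 (1 - E)). nra.
Qed.

Lemma G_ratio x y : G y <= exp (Rabs (y - x)) * G x.
Proof.
  unfold G. pose proof (exp_pos x) as HE. pose proof (exp_pos y) as HF.
  pose proof (exp_pos (Rabs (y - x))) as HD.
  assert (H1 : exp y <= exp (Rabs (y - x)) * exp x).
  { rewrite <- exp_plus. destruct (Req_dec (Rabs (y - x) + x) y) as [->|]; [lra|].
    apply Rlt_le, exp_increasing. pose proof (Rle_abs (y - x)). lra. }
  assert (H2 : exp x <= exp (Rabs (y - x)) * exp y).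
  { rewrite <- exp_plus. destruct (Req_dec (Rabs (y - x) + y) x) as [->|]; [lra|].
    apply Rlt_le, exp_increasing. assert (Rabs (x - y) = Rabs (y - x)) by apply Rabs_minus_sym. pose proof (Rle_abs (x - y)). lra. }
  set (E := exp x) in *. set (F := exp y) in *. set (D := exp (Rabs (y - x))) in *.
  assert (K : F * (1 + E) ^ 2 <= D * E * (1 + F) ^ 2).
  { destruct (Rle_dec E F).
    - assert ((1+E)^2 <= (1+F)^2) by (assert (0 <= (F - E) * (2 + F + E)) by (apply Rmult_le_pos; lra); nra).
      assert (F * (1+F)^2 <= D * E * (1+F)^2) by (apply Rmult_le_compat_r; [apply pow2_ge_0|lra]).
      assert (0 <= F) by lra.
      nra.
    - assert (F * (F * (1 + E) ^ 2) <= F * (D * E * (1 + F) ^ 2)).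
      { assert (E * (E * (1+F)^2) <= (D * F) * (E * (1+F)^2)) by (apply Rmult_le_compat_r; [pose proof (pow2_ge_0 (1+F)); nra|lra]).
        assert (F * (1+E) <= E * (1 + F)) by nra.
        assert (F * (1 + E) * (F * (1+E)) <= E * (1 + F) * (E * (1+F))) by (apply Rmult_le_compat; nra).
        simpl in *.
        nra. }
      apply Rmult_le_reg_l with F; auto. }
  apply (Rmult_le_reg_r ((1+E)^2 * (1+F)^2)); [nra|].
  replace (F / (1 + F) ^ 2 * ((1 + E) ^ 2 * (1 + F) ^ 2)) with (F * (1+E)^2) by (field; repeat split; intro; nra).
  replace (D * (E / (1 + E) ^ 2) * ((1 + E) ^ 2 * (1 + F) ^ 2)) with (D * E * (1+F)^2) by (field; repeat split; intro; nra).
  exact K.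
Qed.


Lemma sm1 f : smooth f -> forall x, ex_derive f x.
Proof. intros H x. exact (H 1%nat x). Qed.
Lemma sm2 f : smooth f -> forall x, ex_derive (Derive f) x.
Proof. intros H x. exact (H 2%nat x). Qed.
Lemma sm3 f : smooth f -> forall x, ex_derive (Derive (Derive f)) x.
Proof. intros H x. exact (H 3%nat x). Qed.
Lemma sm4 f : smooth f -> forall x, ex_derive (Derive (Derive (Derive f))) x.
Proof. intros H x. exact (H 4%nat x). Qed.

Lemma exp_mono x y : x <= y -> exp x <= exp y.
Proof. intro H. destruct (Req_dec x y) as [->|]; [lra|]. apply Rlt_le, exp_increasing; lra. Qed.

Lemma phi_bounds (N K T a b : R) (phi : R -> R) :
  0 < T -> 0 < K -> a < b -> a = (N - K) * T -> b = (N + K) * T ->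
  smooth phi -> phi a = 0 -> phi b = 0 -> Derive phi a = K -> Derive phi b = - K ->
  (forall x, a < x < b -> 0 < phi x) ->
  exists m M L1 C, 0 < m /\ 0 <= L1 /\ 0 <= C /\ forall x, a < x < b ->
    m * ((x - a) * (b - x)) <= phi x /\ phi x <= M * ((x - a) * (b - x)) /\
    Rabs (N - Derive phi x - x / T) <= L1 * ((x - a) * (b - x)) /\
    Rabs ((b - a) * phi x - K * ((x - a) * (b - x))) <= C * ((x - a) * (b - x)) ^ 2.
Proof.
  intros HT HK Hab Ha Hb Hs Hpa Hpb Hda Hdb Hpos.
  pose proof (sm1 _ Hs) as D1. pose proof (sm2 _ Hs) as D2. pose proof (sm3 _ Hs) as D3.
  destruct (continuity_ab_maj (Derive (Derive phi)) a b) as [xM [HM _]];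
    [lra| intros; apply exd_cont; auto|].
  destruct (continuity_ab_min (Derive (Derive phi)) a b) as [xm [Hm _]];
    [lra| intros; apply exd_cont; auto|].
  set (Hb2 := Rabs (Derive (Derive phi) xM) + Rabs (Derive (Derive phi) xm)).
  assert (HB : forall x, a <= x <= b -> Rabs (Derive (Derive phi) x) <= Hb2).
  { intros x Hx. specialize (HM x Hx). specialize (Hm x Hx). apply le_abs. unfold Hb2.
    pose proof (Rle_abs (Derive (Derive phi) xM)). pose proof (Rabs_pos (Derive (Derive phi) xm)).
    pose proof (Rle_abs (- Derive (Derive phi) xm)). rewrite Rabs_Ropp in H1.
    pose proof (Rabs_pos (Derive (Derive phi) xM)). split; lra. }
  assert (Hb2p : 0 <= Hb2) by (unfold Hb2; pose proof (Rabs_pos (Derive (Derive phi) xM));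
    pose proof (Rabs_pos (Derive (Derive phi) xm)); lra).
  set (h := fun x => (b - a) * phi x - K * ((x - a) * (b - x))).
  set (hd := fun x => (b - a) * Derive phi x + K * (2 * x - a - b)).
  assert (E1 : forall x, Derive h x = hd x).
  { intro x. apply is_derive_unique. unfold h, hd. auto_derive; auto.
    change (Derive (fun x0 : R => phi x0)) with (Derive phi). field. }
  assert (E2 : forall x, Derive (Derive h) x = (b - a) * Derive (Derive phi) x + 2 * K).
  { intro x. rewrite (Derive_ext _ _ x E1). apply is_derive_unique. unfold hd. auto_derive; auto.
    change (Derive (fun x0 : R => Derive phi x0)) with (Derive (Derive phi)). field. }
  set (H2 := (b - a) * Hb2 + 2 * K).
  assert (Htay : forall z, a <= z <= b -> ex_derive h z /\ ex_derive (Derive h) z /\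
      Rabs (Derive (Derive h) z) <= H2).
  { intros z Hz. split; [unfold h; auto_derive; auto|]. split.
    - apply (ex_derive_ext hd); [intro; symmetry; apply E1|]. unfold hd; auto_derive; auto.
    - rewrite E2. unfold H2. eapply Rle_trans; [apply Rabs_triang|].
      rewrite Rabs_mult, (Rabs_right (b - a)) by lra. rewrite (Rabs_right (2 * K)) by lra.
      specialize (HB z Hz). nra. }
  assert (ha : h a = 0) by (unfold h; rewrite Hpa; ring).
  assert (hb : h b = 0) by (unfold h; rewrite Hpb; ring).
  assert (hda : Derive h a = 0) by (rewrite E1; unfold hd; rewrite Hda; ring).
  assert (hdb : Derive h b = 0) by (rewrite E1; unfold hd; rewrite Hdb; ring).
  set (C := 2 * H2 / (b - a) ^ 2).
  assert (HC : 0 <= C).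
  { unfold C, H2. apply Rmult_le_pos; [|apply Rlt_le, Rinv_0_lt_compat; nra]. nra. }
  assert (P3 : forall x, a < x < b -> Rabs ((b - a) * phi x - K * ((x - a) * (b - x))) <= C * ((x - a) * (b - x)) ^ 2).
  { intros x Hx.
    pose proof (tay2 h a b H2 ltac:(lra) Htay ha hda x ltac:(lra)) as T1.
    pose proof (tay2r h a b H2 ltac:(lra) Htay hb hdb x ltac:(lra)) as T2.
    pose proof (minsq (Rabs (h x)) (H2 / 2) (x - a) (b - x) ltac:(lra) ltac:(lra) ltac:(lra)
      ltac:(unfold H2; nra) T1 T2) as T3.
    replace (x - a + (b - x)) with (b - a) in T3 by ring. unfold h in T3.
    replace (C * ((x - a) * (b - x)) ^ 2) with (H2 / 2 * (4 * (x - a) ^ 2 * (b - x) ^ 2 / (b - a) ^ 2)).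
    exact T3. unfold C. field. lra. }
  set (Fx := fun x => N - Derive phi x - x / T).
  set (L := Hb2 + / T).
  assert (HFx : forall z, a <= z <= b -> ex_derive Fx z /\ Rabs (Derive Fx z) <= L).
  { intros z Hz. split; [unfold Fx; auto_derive; auto|].
    assert (E : Derive Fx z = - Derive (Derive phi) z - / T).
    { apply is_derive_unique. unfold Fx. auto_derive; auto.
      change (Derive (fun x0 : R => Derive phi x0)) with (Derive (Derive phi)). field. lra. }
    rewrite E. unfold L. eapply Rle_trans; [apply Rabs_triang|]. rewrite Rabs_Ropp.
    rewrite Rabs_Ropp, (Rabs_right (/ T)) by (apply Rle_ge, Rlt_le, Rinv_0_lt_compat; lra).
    specialize (HB z Hz). lra. }
  assert (Fa : Fx a = 0) by (unfold Fx; rewrite Hda, Ha; field; lra).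
  assert (Fb : Fx b = 0) by (unfold Fx; rewrite Hdb, Hb; field; lra).
  assert (HL : 0 <= L) by (unfold L; pose proof (Rinv_0_lt_compat T HT); lra).
  set (L1 := 2 * L / (b - a)).
  assert (PF : forall x, a < x < b -> Rabs (N - Derive phi x - x / T) <= L1 * ((x - a) * (b - x))).
  { intros x Hx.
    pose proof (tay1 Fx a b L ltac:(lra) HFx Fa x ltac:(lra)) as T1.
    pose proof (tay1r Fx a b L ltac:(lra) HFx Fb x ltac:(lra)) as T2.
    rewrite Rmult_comm in T1, T2.
    pose proof (min1 (Rabs (Fx x)) L (x - a) (b - x) ltac:(lra) ltac:(lra) ltac:(lra) HL
      ltac:(lra) ltac:(lra)) as T3.
    replace (x - a + (b - x)) with (b - a) in T3 by ring. unfold Fx in T3.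
    replace (L1 * ((x - a) * (b - x))) with (L * (2 * (x - a) * (b - x) / (b - a))).
    exact T3. unfold L1. field. lra. }
  set (dl := K / (2 * (C + 1)) / (b - a)).
  assert (Hdl : 0 < dl).
  { unfold dl. apply Rdiv_lt_0_compat; [|lra]. apply Rdiv_lt_0_compat; lra. }
  assert (Hm0 : exists m0, 0 < m0 /\ forall x, a + dl <= x <= b - dl -> m0 <= phi x).
  { destruct (Rle_dec (a + dl) (b - dl)).
    - destruct (continuity_ab_min phi (a + dl) (b - dl)) as [y0 [Hy0 Hy1]]; auto.
      + intros; apply exd_cont; auto.
      + exists (phi y0). split; auto. apply Hpos; lra.
    - exists 1. split; [lra|]. intros; lra. }
  destruct Hm0 as [m0 [Hm0p Hm0]].
  set (m := Rmin (K / (2 * (b - a))) (4 * m0 / (b - a) ^ 2)).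
  assert (Hmp : 0 < m).
  { unfold m. apply Rmin_pos. apply Rdiv_lt_0_compat; lra. apply Rdiv_lt_0_compat; nra. }
  set (M := (K + C * (b - a) ^ 2 / 4) / (b - a)).
  exists m, M, L1, C. split; auto. split; [unfold L1; apply Rmult_le_pos;
    [lra|apply Rlt_le, Rinv_0_lt_compat; lra]|]. split; auto.
  intros x Hx. set (u := x - a) in *. set (v := b - x) in *.
  assert (Hu : 0 < u) by (unfold u; lra). assert (Hv : 0 < v) by (unfold v; lra).
  assert (Huv : u + v = b - a) by (unfold u, v; ring).
  assert (Hamgm : u * v <= (b - a) ^ 2 / 4).
  { rewrite <- Huv. pose proof (pow2_ge_0 (u - v)). nra. }
  pose proof (P3 x Hx) as P3x. fold u v in P3x. apply abs_le in P3x.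
  split; [|split; [|split]].
  - destruct (Rle_dec (u * v) (K / (2 * (C + 1)))) as [Hsm|Hsm].
    + assert (C * (u * v) ^ 2 <= (C + 1) * (u * v) * (u * v)) by (pose proof (pow2_ge_0 (u*v)); nra).
      assert ((C + 1) * (u * v) <= K / 2).
      { apply (Rmult_le_compat_l (C + 1)) in Hsm; [|lra].
        replace ((C + 1) * (K / (2 * (C + 1)))) with (K / 2) in Hsm by (field; lra). exact Hsm. }
      assert ((C + 1) * (u * v) * (u * v) <= K / 2 * (u * v)) by (apply Rmult_le_compat_r; nra).
      assert (K / 2 * (u * v) <= (b - a) * phi x) by lra.
      assert (m <= K / (2 * (b - a))) by apply Rmin_l.
      assert (m * (u * v) <= K / (2 * (b - a)) * (u * v)) by (apply Rmult_le_compat_r; nra).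
      assert (K / (2 * (b - a)) * (u * v) <= phi x).
      { apply (Rmult_le_reg_l (b - a)); [lra|].
        replace ((b - a) * (K / (2 * (b - a)) * (u * v))) with (K / 2 * (u * v)) by (field; lra). lra. }
      lra.
    + assert (u * (b - a) >= u * v) by nra.
      assert (v * (b - a) >= u * v) by nra.
      assert (u > dl).
      { unfold dl. apply (Rmult_lt_reg_r (b - a)); [lra|].
        replace (K / (2 * (C + 1)) / (b - a) * (b - a)) with (K / (2 * (C + 1))) by (field; lra). lra. }
      assert (v > dl).
      { unfold dl. apply (Rmult_lt_reg_r (b - a)); [lra|].
        replace (K / (2 * (C + 1)) / (b - a) * (b - a)) with (K / (2 * (C + 1))) by (field; lra). lra. }
      assert (m0 <= phi x) by (apply Hm0; unfold u, v in *; lra).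
      assert (m <= 4 * m0 / (b - a) ^ 2) by apply Rmin_r.
      assert (m * (u * v) <= 4 * m0 / (b - a) ^ 2 * (u * v)) by (apply Rmult_le_compat_r; nra).
      assert (4 * m0 / (b - a) ^ 2 * (u * v) <= m0).
      { apply (Rmult_le_reg_l ((b - a) ^ 2)); [nra|].
        replace ((b - a) ^ 2 * (4 * m0 / (b - a) ^ 2 * (u * v))) with (4 * m0 * (u * v)) by (field; lra).
        nra. }
      lra.
  - assert (C * (u * v) ^ 2 <= C * (b - a) ^ 2 / 4 * (u * v)).
    { replace (C * (u * v) ^ 2) with ((C * (u * v)) * (u * v)) by ring.
      replace (C * (b - a) ^ 2 / 4 * (u * v)) with ((C * (u * v)) * ((b - a) ^ 2 / 4)) by field.
      apply Rmult_le_compat_l; auto. apply Rmult_le_pos; nra. }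
    apply (Rmult_le_reg_l (b - a)); [lra|].
    replace ((b - a) * (M * (u * v))) with ((K + C * (b - a) ^ 2 / 4) * (u * v)) by (unfold M; field; lra).
    lra.
  - apply PF; auto.
  - apply P3; auto.
Qed.

Definition Ff (N T : R) (f : R -> R) r :=
  N * r - (N - 1) * ln (Derive f r) - ln (Derive_n f 2 r) - f r / T.
Definition Fd (N T : R) (f : R -> R) r :=
  N - (N - 1) * (Derive_n f 2 r / Derive f r) - Derive_n f 3 r / Derive_n f 2 r - Derive f r / T.

Lemma Ff_deriv N T f : 0 < T -> smooth f -> (forall r, 0 < Derive f r) -> (forall r, 0 < Derive_n f 2 r) ->
  forall r, is_derive (Ff N T f) r (Fd N T f r).
Proof.
  intros HT Hs H1 H2 r. pose proof (sm1 _ Hs). pose proof (sm2 _ Hs). pose proof (sm3 _ Hs).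
  specialize (H1 r). specialize (H2 r). change (0 < Derive (Derive f) r) in H2.
  unfold Ff, Fd. simpl. auto_derive.
  - repeat split; auto.
  - change (Derive (fun x0 : R => f x0)) with (Derive f).
    change (Derive (fun x0 : R => Derive f x0)) with (Derive (Derive f)).
    change (Derive (fun x0 : R => Derive (Derive f) x0)) with (Derive (Derive (Derive f))).
    field. repeat split; apply Rgt_not_eq; auto.
Qed.

Lemma profile (N K T a b : R) (f phi : R -> R) :
  0 < T -> 0 < K -> K + 1 <= N -> a = (N - K) * T -> b = (N + K) * T ->
  smooth f -> (forall r, 0 < Derive_n f 2 r) ->
  filterlim (Derive f) (Rbar_locally m_infty) (locally a) ->
  filterlim (Derive f) (Rbar_locally p_infty) (locally b) ->
  smooth phi -> phi a = 0 -> phi b = 0 -> Derive phi a = K -> Derive phi b = - K ->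
  (forall r, phi (Derive f r) = Derive_n f 2 r) ->
  exists m1 M1 K3 KF KD, 0 < m1 /\ 0 < M1 /\ 0 <= K3 /\ 0 <= KF /\ 0 <= KD /\
   forall r, (m1 * G (K * r) <= Derive_n f 2 r <= M1 * G (K * r)) /\
     Rabs (Derive_n f 3 r) <= K3 * Derive_n f 2 r /\
     Rabs (Ff N T f r - Ff N T f 0) <= KF /\ Rabs (Fd N T f r) <= KD.
Proof.
  intros HT HK HN Ha Hb Hs Hp2pos Hla Hlb Hsp Hpa Hpb Hda Hdb Heq.
  assert (Hab : a < b) by (rewrite Ha, Hb; nra).
  assert (Ha0 : 0 < a) by (rewrite Ha; nra).
  pose proof (sm1 _ Hs) as D1. pose proof (sm2 _ Hs) as D2. pose proof (sm3 _ Hs) as D3.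
  pose proof (sm1 _ Hsp) as E1. pose proof (sm2 _ Hsp) as E2.
  set (p := Derive f) in *.
  assert (Hbet : forall r, a < p r < b) by (apply between; auto; exact Hp2pos).
  assert (Hpos : forall x, a < x < b -> 0 < phi x).
  { intros x Hx.
    destruct (lim_m p a Hla (x - a)) as [M1 HM1]; [lra|].
    destruct (lim_p p b Hlb (b - x)) as [M2 HM2]; [lra|].
    assert (Q1 : p (M1 - 1) < x) by (specialize (HM1 (M1 - 1) ltac:(lra)); apply abs_lt in HM1; lra).
    assert (Q2 : x < p (M2 + 1)) by (specialize (HM2 (M2 + 1) ltac:(lra)); apply abs_lt in HM2; lra).
    destruct (IVT_gen p (M1 - 1) (M2 + 1) x) as [z [_ Hz]].
    - intro z. apply exd_cont; auto.
    - split. pose proof (Rmin_l (p (M1 - 1)) (p (M2 + 1))); lra.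
      pose proof (Rmax_r (p (M1 - 1)) (p (M2 + 1))); lra.
    - rewrite <- Hz, Heq. auto. }
  destruct (phi_bounds N K T a b phi HT HK Hab Ha Hb Hsp Hpa Hpb Hda Hdb Hpos)
    as [m [M [L1 [C [Hm [HL1 [HC Hphi]]]]]]].
  set (u := fun r => p r - a). set (v := fun r => b - p r).
  assert (Hu : forall r, 0 < u r) by (intro r; unfold u; specialize (Hbet r); lra).
  assert (Hv : forall r, 0 < v r) by (intro r; unfold v; specialize (Hbet r); lra).
  assert (Huv : forall r, u r * v r <= (b - a) ^ 2 / 4).
  { intro r. replace (b - a) with (u r + v r) by (unfold u, v; ring).
    pose proof (pow2_ge_0 (u r - v r)). nra. }
  assert (Hp2 : forall r, Derive_n f 2 r = phi (p r)) by (intro; rewrite Heq; auto).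
  assert (Hmuv : forall r, m * (u r * v r) <= Derive_n f 2 r <= M * (u r * v r)).
  { intro r. rewrite Hp2. destruct (Hphi (p r) (Hbet r)) as [A [B _]]. split; auto. }
  assert (Hp3 : forall r, Derive_n f 3 r = Derive_n f 2 r * Derive phi (p r)).
  { intro r. change (Derive (Derive_n f 2) r = Derive_n f 2 r * Derive phi (p r)).
    rewrite (Derive_ext _ (fun r => phi (p r)) r Hp2).
    rewrite Derive_comp; auto. }
  assert (HFx : forall r, Rabs (N - Derive phi (p r) - p r / T) <= L1 * (u r * v r)).
  { intro r. destruct (Hphi (p r) (Hbet r)) as [_ [_ [A _]]]. exact A. }
  set (K3 := N + (N + K) + L1 * ((b - a) ^ 2 / 4)).
  assert (HK3 : forall r, Rabs (Derive_n f 3 r) <= K3 * Derive_n f 2 r).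
  { intro r. rewrite Hp3, Rabs_mult, (Rabs_right (Derive_n f 2 r)) by (apply Rle_ge, Rlt_le; auto).
    rewrite Rmult_comm. apply Rmult_le_compat_r; [apply Rlt_le; auto|].
    specialize (HFx r). apply abs_le in HFx. specialize (Huv r).
    assert (p r / T < N + K).
    { apply (Rmult_lt_reg_r T); auto. replace (p r / T * T) with (p r) by (field; lra).
      specialize (Hbet r). lra. }
    assert (0 < p r / T) by (apply Rdiv_lt_0_compat; auto; specialize (Hbet r); lra).
    assert (L1 * (u r * v r) <= L1 * ((b - a) ^ 2 / 4)) by (apply Rmult_le_compat_l; auto).
    apply le_abs. unfold K3. split; lra. }
  set (Kc := L1 / m + (N - 1) / a).
  assert (HKc : 0 <= Kc).
  { unfold Kc. apply Rplus_le_le_0_compat; apply Rmult_le_pos; try lra;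
      apply Rlt_le, Rinv_0_lt_compat; lra. }
  assert (Hpp : forall r, 0 < p r) by (intro r; specialize (Hbet r); lra).
  assert (HFd : forall r, Rabs (Fd N T f r) <= Kc * Derive_n f 2 r).
  { intro r. assert (Hq : 0 < Derive_n f 2 r) by apply Hp2pos.
    assert (E : Fd N T f r = (N - Derive phi (p r) - p r / T) - (N - 1) * (Derive_n f 2 r / p r)).
    { unfold Fd. rewrite Hp3. fold p. field. repeat split; apply Rgt_not_eq; auto; apply Hpp. }
    rewrite E. eapply Rle_trans; [apply Rabs_triang|]. rewrite Rabs_Ropp.
    assert (X1 : L1 * (u r * v r) <= L1 / m * Derive_n f 2 r).
    { destruct (Hmuv r) as [A _].
      replace (L1 / m * Derive_n f 2 r) with (L1 * (Derive_n f 2 r / m)) by (field; lra).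
      apply Rmult_le_compat_l; auto. apply (Rmult_le_reg_l m); auto.
      replace (m * (Derive_n f 2 r / m)) with (Derive_n f 2 r) by (field; lra). lra. }
    assert (X2 : Rabs ((N - 1) * (Derive_n f 2 r / p r)) <= (N - 1) / a * Derive_n f 2 r).
    { rewrite Rabs_right.
      - replace ((N - 1) / a * Derive_n f 2 r) with ((N - 1) * (Derive_n f 2 r / a)) by (field; lra).
        apply Rmult_le_compat_l; [lra|]. unfold Rdiv. apply Rmult_le_compat_l; [lra|].
        apply Rinv_le_contravar; auto. specialize (Hbet r); lra.
      - apply Rle_ge, Rmult_le_pos; [lra|]. apply Rlt_le, Rdiv_lt_0_compat; auto. }
    specialize (HFx r). unfold Kc. lra. }
  assert (Hp2M : forall r, Derive_n f 2 r <= M * ((b - a) ^ 2 / 4)).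
  { intro r. destruct (Hmuv r) as [_ A]. assert (0 <= M).
    { assert (0 < M * (u r * v r)) by (pose proof (Hp2pos r); lra).
      assert (0 < u r * v r) by (apply Rmult_lt_0_compat; auto). nra. }
    specialize (Huv r). assert (M * (u r * v r) <= M * ((b - a) ^ 2 / 4)) by (apply Rmult_le_compat_l; auto).
    lra. }
  assert (HF : forall r, Rabs (Ff N T f r - Ff N T f 0) <= Kc * (b - a)).
  { intro r. eapply Rle_trans.
    - apply (dom_all (Ff N T f) (fun r => Kc * p r)).
      intro z. split; [exists (Fd N T f z); apply Ff_deriv; auto; intro; apply Hpp|].
      split; [auto_derive; auto|].
      rewrite (is_derive_unique _ _ _ (Ff_deriv N T f HT Hs Hpp Hp2pos z)).
      rewrite Derive_scal. apply HFd.
    - rewrite <- Rmult_minus_distr_l, Rabs_mult, Rabs_right by lra.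
      apply Rmult_le_compat_l; auto. apply le_abs.
      pose proof (Hbet r); pose proof (Hbet 0); split; lra. }
  assert (HM0 : 0 <= M).
  { assert (0 < M * (u 0 * v 0)) by (pose proof (Hp2pos 0); specialize (Hmuv 0); lra).
    assert (0 < u 0 * v 0) by (apply Rmult_lt_0_compat; auto). nra. }
  set (lK := fun r => ln (p r - a) - ln (b - p r) - K * r).
  assert (Hell : forall r, is_derive lK r (Derive_n f 2 r / u r + Derive_n f 2 r / v r - K)).
  { intro r. unfold lK, u, v. pose proof (Hbet r). auto_derive.
    - repeat split; auto; lra.
    - change (Derive (fun x0 : R => p x0) r) with (Derive_n f 2 r). field. split; lra. }
  assert (Hellb : forall r, Rabs (Derive_n f 2 r / u r + Derive_n f 2 r / v r - K) <= C / m * Derive_n f 2 r).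
  { intro r. pose proof (Hu r). pose proof (Hv r).
    assert (Ev : u r + v r = b - a) by (unfold u, v; ring).
    replace (Derive_n f 2 r / u r + Derive_n f 2 r / v r - K) with
      (((b - a) * phi (p r) - K * ((p r - a) * (b - p r))) / (u r * v r)).
    2:{ rewrite <- Hp2. rewrite <- Ev. unfold u, v. pose proof (Hbet r). field. repeat split; apply Rgt_not_eq; lra. }
    destruct (Hphi (p r) (Hbet r)) as [_ [_ [_ A]]]. fold (u r) (v r) in A |- *.
    unfold Rdiv. rewrite Rabs_mult, (Rabs_right (/ (u r * v r))).
    2:{ apply Rle_ge, Rlt_le, Rinv_0_lt_compat, Rmult_lt_0_compat; auto. }
    assert (0 < u r * v r) by (apply Rmult_lt_0_compat; auto).
    apply Rle_trans with (C * (u r * v r) ^ 2 * / (u r * v r)).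
    { apply Rmult_le_compat_r; auto. apply Rlt_le, Rinv_0_lt_compat; auto. }
    replace (C * (u r * v r) ^ 2 * / (u r * v r)) with (C * (u r * v r)) by (field; lra).
    destruct (Hmuv r) as [B _].
    replace (C * / m * Derive_n f 2 r) with (C * (Derive_n f 2 r / m)) by (field; lra).
    apply Rmult_le_compat_l; auto. apply (Rmult_le_reg_l m); auto.
    replace (m * (Derive_n f 2 r / m)) with (Derive_n f 2 r) by (field; lra). lra. }
  set (D0 := C / m * (b - a) + Rabs (lK 0)).
  assert (HD0 : forall r, Rabs (lK r) <= D0).
  { intro r. assert (X : Rabs (lK r - lK 0) <= C / m * (b - a)).
    { eapply Rle_trans.
      - apply (dom_all lK (fun r => C / m * p r)). intro z. split; [eexists; apply Hell|].
        split; [auto_derive; auto|]. rewrite (is_derive_unique _ _ _ (Hell z)).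
        rewrite Derive_scal. apply Hellb.
      - rewrite <- Rmult_minus_distr_l, Rabs_mult, Rabs_right.
        + apply Rmult_le_compat_l. apply Rmult_le_pos; auto; apply Rlt_le, Rinv_0_lt_compat; auto.
          apply le_abs. pose proof (Hbet r); pose proof (Hbet 0); split; lra.
        + apply Rle_ge, Rmult_le_pos; auto; apply Rlt_le, Rinv_0_lt_compat; auto. }
    unfold D0. pose proof (Rabs_triang (lK r - lK 0) (lK 0)).
    replace (lK r - lK 0 + lK 0) with (lK r) in H by ring. lra. }
  assert (HGu : forall r, u r * v r = (b - a) ^ 2 * G (lK r + K * r)).
  { intro r. pose proof (Hu r). pose proof (Hv r). unfold G.
    replace (lK r + K * r) with (ln (u r) - ln (v r)) by (unfold lK, u, v; ring).
    assert (Ee : exp (ln (u r) - ln (v r)) = u r / v r).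
    { unfold Rminus. rewrite exp_plus, exp_Ropp, !exp_ln by auto. field. lra. }
    rewrite Ee.
    replace (b - a) with (u r + v r) by (unfold u, v; ring). field. split; lra. }
  set (m1 := m * (b - a) ^ 2 * exp (- D0)).
  set (M1 := M * (b - a) ^ 2 * exp D0).
  assert (HD0p : 0 <= D0) by (unfold D0; pose proof (Rabs_pos (lK 0));
    assert (0 <= C / m) by (apply Rmult_le_pos; auto; apply Rlt_le, Rinv_0_lt_compat; auto); nra).
  exists m1, M1, K3, (Kc * (b - a)), (Kc * (M * ((b - a) ^ 2 / 4))).
  split; [unfold m1; apply Rmult_lt_0_compat; [apply Rmult_lt_0_compat; [lra| apply pow_lt; lra] | apply exp_pos]|].
  split.
  { unfold M1. pose proof (exp_pos D0). assert (0 < M * (u 0 * v 0)) by (pose proof (Hp2pos 0); specialize (Hmuv 0); lra).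
    assert (0 < u 0 * v 0) by (apply Rmult_lt_0_compat; auto).
    assert (0 < M) by nra. apply Rmult_lt_0_compat; [apply Rmult_lt_0_compat; [lra| apply pow_lt; lra] | apply exp_pos]. }
  split; [unfold K3; pose proof (pow2_ge_0 (b - a));
    assert (0 <= L1 * ((b - a) ^ 2 / 4)) by (apply Rmult_le_pos; lra); lra|].
  split; [apply Rmult_le_pos; lra|].
  split; [apply Rmult_le_pos; auto; apply Rmult_le_pos; auto; pose proof (pow2_ge_0 (b - a)); lra|].
  intro r. split; [|split; [apply HK3|split; [apply HF|]]].
  - pose proof (HD0 r) as X. pose proof (HGu r) as Y. destruct (Hmuv r) as [A B].
    pose proof (G_ratio (lK r + K * r) (K * r)) as R1.
    pose proof (G_ratio (K * r) (lK r + K * r)) as R2.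
    replace (K * r - (lK r + K * r)) with (- lK r) in R1 by ring. rewrite Rabs_Ropp in R1.
    replace (lK r + K * r - K * r) with (lK r) in R2 by ring.
    pose proof (exp_mono _ _ X) as X1.
    pose proof (G_pos (K * r)). pose proof (G_pos (lK r + K * r)).
    pose proof (exp_pos (Rabs (lK r))). pose proof (exp_pos D0).
    assert (R1' : G (K * r) <= exp D0 * G (lK r + K * r))
      by (eapply Rle_trans; [apply R1|]; apply Rmult_le_compat_r; lra).
    assert (R2' : G (lK r + K * r) <= exp D0 * G (K * r))
      by (eapply Rle_trans; [apply R2|]; apply Rmult_le_compat_r; lra).
    assert (Eb : 0 < (b - a) ^ 2) by nra.
    split.
    + unfold m1. rewrite Y in A.
      assert (exp (- D0) * G (K * r) <= G (lK r + K * r)).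
      { rewrite exp_Ropp. apply (Rmult_le_reg_l (exp D0)); auto.
        replace (exp D0 * (/ exp D0 * G (K * r))) with (G (K * r)) by (field; lra). lra. }
      assert (m * (b - a) ^ 2 * (exp (- D0) * G (K * r)) <= m * (b - a) ^ 2 * G (lK r + K * r))
        by (apply Rmult_le_compat_l; nra).
      lra.
    + unfold M1. rewrite Y in B.
      assert (M * (b - a) ^ 2 * G (lK r + K * r) <= M * (b - a) ^ 2 * (exp D0 * G (K * r)))
        by (apply Rmult_le_compat_l; [apply Rmult_le_pos; lra|exact R2']).
      lra.
  - eapply Rle_trans; [apply HFd|]. apply Rmult_le_compat_l; auto.
Qed.


Lemma ln_mono x y : 0 < x -> x <= y -> ln x <= ln y.
Proof. intros. destruct (Req_dec x y) as [->|]; [lra|]. apply Rlt_le, ln_increasing; lra. Qed.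

Lemma ln_divR x y : 0 < x -> 0 < y -> ln (x / y) = ln x - ln y.
Proof. intros. unfold Rdiv. rewrite ln_mult, ln_Rinv; try lra. apply Rinv_0_lt_compat; auto. Qed.

Lemma lim_comb_m (y p : R -> R) A B k : 0 <= k ->
  filterlim y (Rbar_locally m_infty) (locally A) -> filterlim p (Rbar_locally m_infty) (locally B) ->
  forall eps, 0 < eps -> exists M, forall x, x <= M -> Rabs (y x - k * p x - (A - k * B)) < eps.
Proof.
  intros Hk Hy Hp eps He.
  destruct (lim_m y A Hy (eps / 2)) as [M1 H1]; [lra|].
  destruct (lim_m p B Hp (eps / 2 / (k + 1))) as [M2 H2].
  { apply Rdiv_lt_0_compat; lra. }
  exists (Rmin M1 M2 - 1). intros x Hx.
  assert (x < M1) by (pose proof (Rmin_l M1 M2); lra).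
  assert (x < M2) by (pose proof (Rmin_r M1 M2); lra).
  specialize (H1 x ltac:(lra)). specialize (H2 x ltac:(lra)).
  replace (y x - k * p x - (A - k * B)) with ((y x - A) - k * (p x - B)) by ring.
  eapply Rle_lt_trans; [apply Rabs_triang|]. rewrite Rabs_Ropp, Rabs_mult, (Rabs_right k) by lra.
  assert (k * Rabs (p x - B) <= (k + 1) * Rabs (p x - B)) by (pose proof (Rabs_pos (p x - B)); nra).
  assert ((k + 1) * Rabs (p x - B) < eps / 2).
  { apply (Rmult_lt_compat_l (k + 1)) in H2; [|lra].
    replace ((k + 1) * (eps / 2 / (k + 1))) with (eps / 2) in H2 by (field; lra). exact H2. }
  lra.
Qed.

Lemma lim_comb_p (y p : R -> R) A B k : 0 <= k ->
  filterlim y (Rbar_locally p_infty) (locally A) -> filterlim p (Rbar_locally p_infty) (locally B) ->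
  forall eps, 0 < eps -> exists M, forall x, M <= x -> Rabs (y x - k * p x - (A - k * B)) < eps.
Proof.
  intros Hk Hy Hp eps He.
  destruct (lim_p y A Hy (eps / 2)) as [M1 H1]; [lra|].
  destruct (lim_p p B Hp (eps / 2 / (k + 1))) as [M2 H2].
  { apply Rdiv_lt_0_compat; lra. }
  exists (Rmax M1 M2 + 1). intros x Hx.
  assert (M1 < x) by (pose proof (Rmax_l M1 M2); lra).
  assert (M2 < x) by (pose proof (Rmax_r M1 M2); lra).
  specialize (H1 x ltac:(lra)). specialize (H2 x ltac:(lra)).
  replace (y x - k * p x - (A - k * B)) with ((y x - A) - k * (p x - B)) by ring.
  eapply Rle_lt_trans; [apply Rabs_triang|]. rewrite Rabs_Ropp, Rabs_mult, (Rabs_right k) by lra.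
  assert (k * Rabs (p x - B) <= (k + 1) * Rabs (p x - B)) by (pose proof (Rabs_pos (p x - B)); nra).
  assert ((k + 1) * Rabs (p x - B) < eps / 2).
  { apply (Rmult_lt_compat_l (k + 1)) in H2; [|lra].
    replace ((k + 1) * (eps / 2 / (k + 1))) with (eps / 2) in H2 by (field; lra). exact H2. }
  lra.
Qed.

Lemma flow_est (n : nat) (N K T t c KF KD : R) (f f0 : R -> R) :
  N = INR n -> (1 <= n)%nat -> 0 < T -> 0 < K -> K + 1 <= N -> 0 < t < T ->
  smooth f -> smooth f0 ->
  (forall r, 0 < Derive f r) -> (forall r, 0 < Derive_n f 2 r) ->
  (forall r, 0 < Derive f0 r) -> (forall r, 0 < Derive_n f0 2 r) ->
  filterlim (Derive f) (Rbar_locally m_infty) (locally ((N - K) * (T - t))) ->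
  filterlim (Derive f) (Rbar_locally p_infty) (locally ((N + K) * (T - t))) ->
  filterlim (Derive f0) (Rbar_locally m_infty) (locally ((N - K) * T)) ->
  filterlim (Derive f0) (Rbar_locally p_infty) (locally ((N + K) * T)) ->
  (forall r, f r - f0 r + t * N * r - t * ln ((Derive f r) ^ (n - 1) * Derive_n f 2 r) = c) ->
  (forall r, Rabs (Ff N T f0 r - Ff N T f0 0) <= KF) -> (forall r, Rabs (Fd N T f0 r) <= KD) ->
  (forall r, Rabs (Derive f r - (T - t) / T * Derive f0 r) <= t * KD) /\
  (forall r, Rabs (ln (Derive_n f 2 r / Derive_n f0 2 r) + (N - 1) * ln (Derive f r / Derive f0 r)
            - N * ln ((T - t) / T)) <= N * ln 2 + 2 * KF + 1) /\
  (forall r, Derive_n f 3 r / Derive_n f 2 r =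
     (Derive f r - (T - t) / T * Derive f0 r) / t + N - Derive f0 r / T - (N - 1) * (Derive_n f 2 r / Derive f r)).
Proof.
  intros HN Hn1 HT HK HNK Ht Hs Hs0 Hy1 Hy2 Hp1 Hp2 Hlym Hlyp Hlpm Hlpp Hc HKF HKD.
  assert (HN1 : INR (n - 1) = N - 1) by (rewrite minus_INR by auto; simpl; lra).
  assert (HKDp : 0 <= KD) by (pose proof (HKD 0); pose proof (Rabs_pos (Fd N T f0 0)); lra).
  set (s := T - t) in *. assert (Hs_ : 0 < s) by (unfold s; lra).
  pose proof (sm1 _ Hs) as Df1. pose proof (sm2 _ Hs) as Df2. pose proof (sm3 _ Hs) as Df3.
  pose proof (sm4 _ Hs) as Df4.
  pose proof (sm1 _ Hs0) as Dg1. pose proof (sm2 _ Hs0) as Dg2. pose proof (sm3 _ Hs0) as Dg3.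
  pose proof (sm4 _ Hs0) as Dg4.
  set (y := Derive f) in *. set (p := Derive f0) in *.
  assert (Hby : forall r, (N - K) * s < y r < (N + K) * s) by (apply between; auto; exact Hy2).
  assert (Hbp : forall r, (N - K) * T < p r < (N + K) * T) by (apply between; auto; exact Hp2).
  change (forall r, 0 < Derive y r) in Hy2. change (forall r, 0 < Derive p r) in Hp2.
  change (Derive_n f 2) with (Derive y) in *. change (Derive_n f0 2) with (Derive p) in *.
  change (Derive_n f 3) with (Derive (Derive y)) in *. change (Derive_n f0 3) with (Derive (Derive p)) in *.
  set (y2 := Derive y) in *. set (p2 := Derive p) in *.
  set (y3 := Derive y2) in *. set (p3 := Derive p2) in *.
  assert (Hyp : forall r, 0 < y r) by (intro r; specialize (Hby r); nra).
  assert (Hpp : forall r, 0 < p r) by (intro r; specialize (Hbp r); nra).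
  set (xi := fun r => y r - s / T * p r).
  set (psi := fun r => (f r - s / T * f0 r) / t).
  set (Phi := fun r => ln (y2 r / p2 r) + (N - 1) * ln (y r / p r)).
  set (DPhi := fun r => y3 r / y2 r - p3 r / p2 r + (N - 1) * (y2 r / y r - p2 r / p r)).
  assert (I1 : forall r, Phi r = psi r + Ff N T f0 r - c / t).
  { intro r. specialize (Hc r). rewrite ln_mult, ln_pow, HN1 in Hc; auto.
    2:{ apply pow_lt; auto. }
    unfold Phi, psi, Ff. fold p. change (Derive_n f0 2 r) with (p2 r).
    rewrite !ln_divR by auto. rewrite <- Hc. unfold s. field. lra. }
  assert (Dpsi : forall r, is_derive psi r (xi r / t)).
  { intro r. unfold psi, xi. auto_derive; auto.
    change (Derive (fun x0 : R => f x0)) with y. change (Derive (fun x0 : R => f0 x0)) with p. field. lra. }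
  assert (Dxi : forall r, is_derive xi r (y2 r - s / T * p2 r)).
  { intro r. unfold xi. auto_derive; auto.
    change (Derive (fun x0 : R => y x0)) with y2. change (Derive (fun x0 : R => p x0)) with p2. field. lra. }
  assert (D2xi : forall r, is_derive (fun r => y2 r - s / T * p2 r) r (y3 r - s / T * p3 r)).
  { intro r. auto_derive; auto.
    change (Derive (fun x0 : R => y2 x0)) with y3. change (Derive (fun x0 : R => p2 x0)) with p3. field. lra. }
  assert (DPhi_ : forall r, is_derive Phi r (DPhi r)).
  { intro r. unfold Phi, DPhi. pose proof (Hyp r). pose proof (Hpp r). pose proof (Hy2 r). pose proof (Hp2 r).
    auto_derive.
    - repeat split; try assumption; try (apply Rdiv_lt_0_compat; assumption); try (apply Rgt_not_eq; assumption); auto.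
    - change (Derive (fun x0 : R => y x0)) with y2. change (Derive (fun x0 : R => p x0)) with p2.
      change (Derive (fun x0 : R => y2 x0)) with y3. change (Derive (fun x0 : R => p2 x0)) with p3.
      field. repeat split; apply Rgt_not_eq; auto. }
  assert (I2 : forall r, DPhi r = xi r / t + Fd N T f0 r).
  { intro r. rewrite <- (is_derive_unique _ _ _ (DPhi_ r)).
    rewrite (Derive_ext _ _ r I1). apply is_derive_unique. auto_derive.
    - repeat split; auto. eexists; apply Dpsi. eexists; apply (Ff_deriv N T f0 HT Hs0 Hp1 Hp2).
    - change (Derive (fun x0 : R => psi x0) r) with (Derive psi r).
      change (Derive (fun x0 : R => Ff N T f0 x0) r) with (Derive (Ff N T f0) r).
      rewrite (is_derive_unique _ _ _ (Dpsi r)), (is_derive_unique _ _ _ (Ff_deriv N T f0 HT Hs0 Hp1 Hp2 r)).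
      ring. }
  assert (I3 : forall r, y3 r / y2 r = xi r / t + N - p r / T - (N - 1) * (y2 r / y r)).
  { intro r. pose proof (I2 r) as E. unfold DPhi, Fd in E. fold p in E.
    change (Derive_n f0 2 r) with (p2 r) in E. change (Derive_n f0 3 r) with (p3 r) in E. lra. }
  assert (EDxi : forall z, Derive xi z = y2 z - s / T * p2 z) by (intro; apply is_derive_unique, Dxi).
  assert (ED2xi : forall z, Derive (Derive xi) z = y3 z - s / T * p3 z).
  { intro z. rewrite (Derive_ext _ _ z EDxi). apply is_derive_unique, D2xi. }
  assert (Xd1 : forall z, ex_derive xi z) by (intro; eexists; apply Dxi).
  assert (Xd2 : forall z, ex_derive (Derive xi) z).
  { intro z. apply (ex_derive_ext (fun z => y2 z - s / T * p2 z)); [intro; symmetry; apply EDxi|].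
    eexists; apply D2xi. }
  assert (Xd3 : forall z, ex_derive (Derive (Derive xi)) z).
  { intro z. apply (ex_derive_ext (fun z => y3 z - s / T * p3 z)); [intro; symmetry; apply ED2xi|].
    auto_derive; auto. }
  assert (Hsk : 0 <= s / T) by (apply Rlt_le, Rdiv_lt_0_compat; auto).
  assert (Hxm : forall eps, 0 < eps -> exists M, forall x, x <= M -> Rabs (xi x) < eps).
  { intros eps He. destruct (lim_comb_m y p ((N - K) * s) ((N - K) * T) (s / T) Hsk Hlym Hlpm eps He) as [M HM].
    exists M. intros x Hx. specialize (HM x Hx). unfold xi.
    replace ((N - K) * s - s / T * ((N - K) * T)) with 0 in HM by (field; lra). rewrite Rminus_0_r in HM. exact HM. }
  assert (Hxp : forall eps, 0 < eps -> exists M, forall x, M <= x -> Rabs (xi x) < eps).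
  { intros eps He. destruct (lim_comb_p y p ((N + K) * s) ((N + K) * T) (s / T) Hsk Hlyp Hlpp eps He) as [M HM].
    exists M. intros x Hx. specialize (HM x Hx). unfold xi.
    replace ((N + K) * s - s / T * ((N + K) * T)) with 0 in HM by (field; lra). rewrite Rminus_0_r in HM. exact HM. }
  assert (Hcont : forall z, continuity_pt xi z) by (intro; apply exd_cont; auto).
  assert (XiU : forall r, xi r <= t * KD).
  { intro r0. destruct (Rle_dec (xi r0) (t * KD)) as [?|Hn]; auto. exfalso.
    assert (Hx0 : 0 < xi r0) by nra.
    destruct (exists_max_val xi r0 Hcont) as [c0 Hc0].
    { destruct (Hxm (xi r0) Hx0) as [M HM]. exists M. intros x Hx. specialize (HM x Hx). apply abs_lt in HM; lra. }
    { destruct (Hxp (xi r0) Hx0) as [M HM]. exists M. intros x Hx. specialize (HM x Hx). apply abs_lt in HM; lra. }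
    destruct (max_conds xi c0 Xd1 Xd2 (Xd3 c0) Hc0) as [A B].
    rewrite EDxi in A. rewrite ED2xi in B.
    pose proof (Hc0 r0) as Hr0. pose proof (Hyp c0). pose proof (Hpp c0). pose proof (Hy2 c0). pose proof (Hp2 c0).
    assert (E : DPhi c0 = (y3 c0 - s / T * p3 c0) / y2 c0 - (N - 1) * (p2 c0 * xi c0 / (y c0 * p c0))).
    { unfold DPhi, xi. assert (y2 c0 = s / T * p2 c0) by lra. rewrite H3. field.
      repeat split; apply Rgt_not_eq; auto. }
    assert (T1 : (y3 c0 - s / T * p3 c0) / y2 c0 <= 0).
    { unfold Rdiv. pose proof (Rinv_0_lt_compat _ H1). nra. }
    assert (T2 : 0 <= (N - 1) * (p2 c0 * xi c0 / (y c0 * p c0))).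
    { apply Rmult_le_pos; [lra|]. apply Rlt_le, Rdiv_lt_0_compat; [|nra]. apply Rmult_lt_0_compat; lra. }
    pose proof (I2 c0). pose proof (HKD c0) as Q. apply abs_le in Q.
    assert (xi c0 / t <= KD) by lra.
    assert (xi c0 <= t * KD).
    { apply (Rmult_le_compat_l t) in H4; [|lra]. replace (t * (xi c0 / t)) with (xi c0) in H4 by (field; lra). lra. }
    lra. }
  assert (XiL : forall r, - (t * KD) <= xi r).
  { intro r0. destruct (Rle_dec (- (t * KD)) (xi r0)) as [?|Hn]; auto. exfalso.
    assert (Hx0 : 0 < - xi r0) by nra.
    destruct (exists_max_val (fun x => - xi x) r0) as [c0 Hc0].
    { intro z. apply exd_cont. auto_derive; auto. }
    { destruct (Hxm (- xi r0) Hx0) as [M HM]. exists M. intros x Hx. specialize (HM x Hx). apply abs_lt in HM; lra. }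
    { destruct (Hxp (- xi r0) Hx0) as [M HM]. exists M. intros x Hx. specialize (HM x Hx). apply abs_lt in HM; lra. }
    destruct (min_conds xi c0 Xd1 Xd2 (Xd3 c0)) as [A B].
    { intro z. specialize (Hc0 z). simpl in Hc0. lra. }
    rewrite EDxi in A. rewrite ED2xi in B.
    pose proof (Hc0 r0) as Hr0. simpl in Hr0.
    pose proof (Hyp c0). pose proof (Hpp c0). pose proof (Hy2 c0). pose proof (Hp2 c0).
    assert (E : DPhi c0 = (y3 c0 - s / T * p3 c0) / y2 c0 - (N - 1) * (p2 c0 * xi c0 / (y c0 * p c0))).
    { unfold DPhi, xi. assert (y2 c0 = s / T * p2 c0) by lra. rewrite H3. field.
      repeat split; apply Rgt_not_eq; auto. }
    assert (T1 : 0 <= (y3 c0 - s / T * p3 c0) / y2 c0).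
    { unfold Rdiv. pose proof (Rinv_0_lt_compat _ H1). nra. }
    assert (T2 : (N - 1) * (p2 c0 * xi c0 / (y c0 * p c0)) <= 0).
    { assert (0 < (p2 c0 * - xi c0 / (y c0 * p c0))).
      { apply Rdiv_lt_0_compat; [|apply Rmult_lt_0_compat; lra]. nra. }
      replace (p2 c0 * xi c0 / (y c0 * p c0)) with (- (p2 c0 * - xi c0 / (y c0 * p c0))) by (field; split; lra).
      nra. }
    pose proof (I2 c0). pose proof (HKD c0) as Q. apply abs_le in Q.
    assert (- KD <= xi c0 / t) by lra.
    assert (- (t * KD) <= xi c0).
    { apply (Rmult_le_compat_l t) in H4; [|lra]. replace (t * (xi c0 / t)) with (xi c0) in H4 by (field; lra). lra. }
    lra. }
  split; [intro r; apply le_abs; split; [apply XiL|apply XiU]|].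
  split; [|exact I3].
  set (B := fun x => f0 x - N * T * x).
  assert (DB : forall z, Derive B z = p z - N * T).
  { intro z. apply is_derive_unique. unfold B. auto_derive; auto.
    change (Derive (fun x0 : R => f0 x0) z) with (p z). field. }
  assert (Hpm : exists M, forall x, x <= M -> p x < N * T - K * T / 2).
  { destruct (lim_m p _ Hlpm (K * T / 2)) as [M HM]; [nra|]. exists (M - 1). intros x Hx.
    specialize (HM x ltac:(lra)). apply abs_lt in HM. lra. }
  assert (Hpp2 : exists M, forall x, M <= x -> N * T + K * T / 2 < p x).
  { destruct (lim_p p _ Hlpp (K * T / 2)) as [M HM]; [nra|]. exists (M + 1). intros x Hx.
    specialize (HM x ltac:(lra)). apply abs_lt in HM. lra. }
  destruct Hpm as [Mpm Hpm]. destruct Hpp2 as [Mpp Hpp2].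
  destruct (exists_max_der (fun x => - B x)) as [cB HcB].
  { intro z. unfold B. auto_derive; auto. }
  { exists Mpm. intros x Hx. rewrite Derive_opp, DB. specialize (Hpm x Hx). nra. }
  { exists Mpp. intros x Hx. rewrite Derive_opp, DB. specialize (Hpp2 x Hx). nra. }
  assert (HBmin : forall x, B cB <= B x) by (intro x; specialize (HcB x); simpl in HcB; lra).
  assert (Xpsi : forall z, ex_derive psi z) by (intro; eexists; apply Dpsi).
  intro r.
  set (Dl := B r - B cB). assert (HDl : 0 <= Dl) by (unfold Dl; specialize (HBmin r); lra).
  set (eps := Rmin (s / (2 * T * t)) (1 / (Dl + 1))).
  assert (He : 0 < eps).
  { unfold eps. apply Rmin_pos; apply Rdiv_lt_0_compat; try lra. apply Rmult_lt_0_compat; lra. }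
  assert (Hte : t * eps <= s / (2 * T)).
  { assert (eps <= s / (2 * T * t)) by apply Rmin_l.
    apply (Rmult_le_compat_l t) in H; [|lra]. replace (t * (s / (2 * T * t))) with (s / (2 * T)) in H by (field; lra).
    exact H. }
  assert (HeD : forall z, eps * (B r - B z) <= 1).
  { intro z. specialize (HBmin z). assert (eps <= 1 / (Dl + 1)) by apply Rmin_r.
    assert (eps * (B r - B z) <= eps * Dl) by (unfold Dl; apply Rmult_le_compat_l; lra).
    assert (eps * Dl <= 1 / (Dl + 1) * Dl) by (apply Rmult_le_compat_r; lra).
    assert (1 / (Dl + 1) * Dl <= 1).
    { apply (Rmult_le_reg_l (Dl + 1)); [lra|]. replace ((Dl + 1) * (1 / (Dl + 1) * Dl)) with Dl by (field; lra). lra. }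
    lra. }
  assert (Hst : 0 < s / T) by (apply Rdiv_lt_0_compat; lra).
  destruct (Hxm (t * eps * K * T / 2)) as [Mxm Hxm']. { repeat apply Rmult_lt_0_compat; lra. }
  destruct (Hxp (t * eps * K * T / 2)) as [Mxp Hxp']. { repeat apply Rmult_lt_0_compat; lra. }
  assert (Lm : forall x, x <= Rmin Mxm Mpm -> - (eps * K * T / 2) < xi x / t < eps * K * T / 2).
  { intros x Hx. assert (x <= Mxm) by (pose proof (Rmin_l Mxm Mpm); lra).
    specialize (Hxm' x H). apply abs_lt in Hxm'. split.
    - apply (Rmult_lt_reg_l t); [lra|]. replace (t * (xi x / t)) with (xi x) by (field; lra). lra.
    - apply (Rmult_lt_reg_l t); [lra|]. replace (t * (xi x / t)) with (xi x) by (field; lra). lra. }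
  assert (Lp : forall x, Rmax Mxp Mpp <= x -> - (eps * K * T / 2) < xi x / t < eps * K * T / 2).
  { intros x Hx. assert (Mxp <= x) by (pose proof (Rmax_l Mxp Mpp); lra).
    specialize (Hxp' x H). apply abs_lt in Hxp'. split.
    - apply (Rmult_lt_reg_l t); [lra|]. replace (t * (xi x / t)) with (xi x) by (field; lra). lra.
    - apply (Rmult_lt_reg_l t); [lra|]. replace (t * (xi x / t)) with (xi x) by (field; lra). lra. }
  assert (Lpm : forall x, x <= Rmin Mxm Mpm -> p x < N * T - K * T / 2)
    by (intros x Hx; apply Hpm; pose proof (Rmin_r Mxm Mpm); lra).
  assert (Lpp : forall x, Rmax Mxp Mpp <= x -> N * T + K * T / 2 < p x)
    by (intros x Hx; apply Hpp2; pose proof (Rmax_r Mxp Mpp); lra).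
  assert (HFr : forall z, Rabs (Ff N T f0 r - Ff N T f0 z) <= 2 * KF).
  { intro z. pose proof (HKF r). pose proof (HKF z).
    replace (Ff N T f0 r - Ff N T f0 z) with ((Ff N T f0 r - Ff N T f0 0) - (Ff N T f0 z - Ff N T f0 0)) by ring.
    eapply Rle_trans; [apply Rabs_triang|]. rewrite Rabs_Ropp. lra. }
  assert (Hln2 : 0 < ln 2) by (rewrite <- ln_1; apply ln_increasing; lra).
  apply le_abs. split.
  -
    set (G2 := fun x => psi x + eps * B x).
    assert (EG2 : forall z, Derive G2 z = xi z / t + eps * (p z - N * T)).
    { intro z. apply is_derive_unique. unfold G2, B. auto_derive.
      - repeat split; auto.
      - change (Derive (fun x0 : R => psi x0) z) with (Derive psi z).
        change (Derive (fun x0 : R => f0 x0) z) with (p z).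
        rewrite (is_derive_unique _ _ _ (Dpsi z)). ring. }
    assert (E2G2 : forall z, Derive (Derive G2) z = (y2 z - s / T * p2 z) / t + eps * p2 z).
    { intro z. rewrite (Derive_ext _ _ z EG2). apply is_derive_unique. auto_derive.
      - repeat split; auto.
      - change (Derive (fun x0 : R => xi x0) z) with (Derive xi z).
        change (Derive (fun x0 : R => p x0) z) with (p2 z). rewrite EDxi. field. lra. }
    assert (XG1 : forall z, ex_derive G2 z) by (intro; unfold G2, B; auto_derive; auto).
    assert (XG2 : forall z, ex_derive (Derive G2) z).
    { intro z. apply (ex_derive_ext (fun z => xi z / t + eps * (p z - N * T))); [intro; symmetry; apply EG2|].
      auto_derive; auto. }
    assert (XG3 : forall z, ex_derive (Derive (Derive G2)) z).
    { intro z. apply (ex_derive_ext (fun z => (y2 z - s / T * p2 z) / t + eps * p2 z)); [intro; symmetry; apply E2G2|].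
      auto_derive; auto. }
    destruct (exists_max_der (fun x => - G2 x)) as [c2 Hc2].
    { intro z. auto_derive; auto. }
    { exists (Rmin Mxm Mpm). intros x Hx. rewrite Derive_opp, EG2. specialize (Lm x Hx). specialize (Lpm x Hx). nra. }
    { exists (Rmax Mxp Mpp). intros x Hx. rewrite Derive_opp, EG2. specialize (Lp x Hx). specialize (Lpp x Hx). nra. }
    destruct (min_conds G2 c2 XG1 XG2 (XG3 c2)) as [A1 A2].
    { intro z. specialize (Hc2 z). simpl in Hc2. lra. }
    rewrite EG2 in A1. rewrite E2G2 in A2.
    pose proof (Hyp c2). pose proof (Hpp c2). pose proof (Hy2 c2). pose proof (Hp2 c2).
    set (q := s / T - t * eps).
    assert (Hq : s / T * / 2 <= q).
    { unfold q. replace (s / (2 * T)) with (s / T * / 2) in Hte by (field; lra). lra. }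
    assert (Hq0 : 0 < s / T * / 2) by (apply Rmult_lt_0_compat; lra).
    assert (Hxi2 : xi c2 = - (t * eps) * (p c2 - N * T)).
    { replace (xi c2) with (t * (xi c2 / t)) by (field; lra). replace (xi c2 / t) with (- (eps * (p c2 - N * T))) by lra. ring. }
    assert (Y1 : q * p2 c2 <= y2 c2).
    { assert (0 <= (y2 c2 - s / T * p2 c2) / t + eps * p2 c2) by lra.
      apply (Rmult_le_compat_l t) in H3; [|lra].
      replace (t * ((y2 c2 - s / T * p2 c2) / t + eps * p2 c2)) with (y2 c2 - q * p2 c2) in H3 by (unfold q; field; lra).
      lra. }
    assert (Y0 : q * p c2 <= y c2).
    { unfold xi in Hxi2. unfold q. assert (0 <= t * eps * (N * T)) by (repeat apply Rmult_le_pos; lra). nra. }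
    assert (L1 : ln (s / T * / 2) <= ln (y2 c2 / p2 c2)).
    { apply ln_mono; auto. apply (Rmult_le_reg_r (p2 c2)); auto.
      replace (y2 c2 / p2 c2 * p2 c2) with (y2 c2) by (field; lra). nra. }
    assert (L2 : ln (s / T * / 2) <= ln (y c2 / p c2)).
    { apply ln_mono; auto. apply (Rmult_le_reg_r (p c2)); auto.
      replace (y c2 / p c2 * p c2) with (y c2) by (field; lra). nra. }
    rewrite ln_mult, ln_Rinv in L1, L2 by lra.
    assert (PhiC : N * (ln (s / T) - ln 2) <= Phi c2).
    { unfold Phi. assert ((N - 1) * (ln (s / T) + - ln 2) <= (N - 1) * ln (y c2 / p c2)) by (apply Rmult_le_compat_l; lra).
      lra. }
    specialize (Hc2 r). simpl in Hc2. unfold G2 in Hc2.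
    pose proof (I1 r) as Ir. pose proof (I1 c2) as Ic.
    pose proof (HFr c2) as F2. apply abs_le in F2. pose proof (HeD c2).
    assert (Phi r >= N * ln (s / T) - (N * ln 2 + 2 * KF + 1)) by nra.
    fold (Phi r). lra.
  -
    set (G1 := fun x => psi x - eps * B x).
    assert (EG1 : forall z, Derive G1 z = xi z / t - eps * (p z - N * T)).
    { intro z. apply is_derive_unique. unfold G1, B. auto_derive.
      - repeat split; auto.
      - change (Derive (fun x0 : R => psi x0) z) with (Derive psi z).
        change (Derive (fun x0 : R => f0 x0) z) with (p z).
        rewrite (is_derive_unique _ _ _ (Dpsi z)). ring. }
    assert (E2G1 : forall z, Derive (Derive G1) z = (y2 z - s / T * p2 z) / t - eps * p2 z).
    { intro z. rewrite (Derive_ext _ _ z EG1). apply is_derive_unique. auto_derive.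
      - repeat split; auto.
      - change (Derive (fun x0 : R => xi x0) z) with (Derive xi z).
        change (Derive (fun x0 : R => p x0) z) with (p2 z). rewrite EDxi. field. lra. }
    assert (XG1 : forall z, ex_derive G1 z) by (intro; unfold G1, B; auto_derive; auto).
    assert (XG2 : forall z, ex_derive (Derive G1) z).
    { intro z. apply (ex_derive_ext (fun z => xi z / t - eps * (p z - N * T))); [intro; symmetry; apply EG1|].
      auto_derive; auto. }
    assert (XG3 : forall z, ex_derive (Derive (Derive G1)) z).
    { intro z. apply (ex_derive_ext (fun z => (y2 z - s / T * p2 z) / t - eps * p2 z)); [intro; symmetry; apply E2G1|].
      auto_derive; auto. }
    destruct (exists_max_der G1 XG1) as [c1 Hc1].
    { exists (Rmin Mxm Mpm). intros x Hx. rewrite EG1. specialize (Lm x Hx). specialize (Lpm x Hx). nra. }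
    { exists (Rmax Mxp Mpp). intros x Hx. rewrite EG1. specialize (Lp x Hx). specialize (Lpp x Hx). nra. }
    destruct (max_conds G1 c1 XG1 XG2 (XG3 c1) Hc1) as [A1 A2].
    rewrite EG1 in A1. rewrite E2G1 in A2.
    pose proof (Hyp c1). pose proof (Hpp c1). pose proof (Hy2 c1). pose proof (Hp2 c1).
    set (q := s / T + t * eps).
    assert (Hq : q <= 2 * (s / T)).
    { unfold q. replace (s / (2 * T)) with (s / T * / 2) in Hte by (field; lra). lra. }
    assert (Hq0 : 0 < q) by (unfold q; assert (0 < t * eps) by (apply Rmult_lt_0_compat; lra); lra).
    assert (Hxi1 : xi c1 = (t * eps) * (p c1 - N * T)).
    { replace (xi c1) with (t * (xi c1 / t)) by (field; lra). replace (xi c1 / t) with (eps * (p c1 - N * T)) by lra. ring. }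
    assert (Y1 : y2 c1 <= q * p2 c1).
    { assert ((y2 c1 - s / T * p2 c1) / t - eps * p2 c1 <= 0) by lra.
      apply (Rmult_le_compat_l t) in H3; [|lra].
      replace (t * ((y2 c1 - s / T * p2 c1) / t - eps * p2 c1)) with (y2 c1 - q * p2 c1) in H3 by (unfold q; field; lra).
      lra. }
    assert (Y0 : y c1 <= q * p c1).
    { unfold xi in Hxi1. unfold q. assert (0 <= t * eps * (N * T)) by (repeat apply Rmult_le_pos; lra). nra. }
    assert (L1 : ln (y2 c1 / p2 c1) <= ln (2 * (s / T))).
    { apply ln_mono; [apply Rdiv_lt_0_compat; auto|]. apply (Rmult_le_reg_r (p2 c1)); auto.
      replace (y2 c1 / p2 c1 * p2 c1) with (y2 c1) by (field; lra). nra. }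
    assert (L2 : ln (y c1 / p c1) <= ln (2 * (s / T))).
    { apply ln_mono; [apply Rdiv_lt_0_compat; auto|]. apply (Rmult_le_reg_r (p c1)); auto.
      replace (y c1 / p c1 * p c1) with (y c1) by (field; lra). nra. }
    rewrite ln_mult in L1, L2 by lra.
    assert (PhiC : Phi c1 <= N * (ln 2 + ln (s / T))).
    { unfold Phi. assert ((N - 1) * ln (y c1 / p c1) <= (N - 1) * (ln 2 + ln (s / T))) by (apply Rmult_le_compat_l; lra).
      lra. }
    specialize (Hc1 r). unfold G1 in Hc1.
    pose proof (I1 r) as Ir. pose proof (I1 c1) as Ic.
    pose proof (HFr c1) as F2. apply abs_le in F2. pose proof (HeD c1).
    assert (Phi r <= N * ln (s / T) + (N * ln 2 + 2 * KF + 1)) by nra.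
    fold (Phi r). lra.
Qed.


Theorem mainTheorem10 (n k : nat) (u : R -> R -> R) (a0 b0 : R)
  (hk1 : (1 <= k)%nat) (hkn : (k <= n - 1)%nat)
  (ha0 : 0 < a0) (hab : a0 < b0)
  (hcase : a0 * (INR n + INR k) = b0 * (INR n - INR k))
  (hsol : forall t, 0 <= t < a0 / (INR n - INR k) ->
     calabi_potential n k (a0 + (INR k - INR n) * t) (b0 - (INR k + INR n) * t) (u t)
     /\ continuity_eq n (u 0) (u t) t) :
  let T := a0 / (INR n - INR k) in
  (forall t r, 0 <= t < T ->
     (INR n - INR k) * (T - t) < Derive (u t) r < (INR n + INR k) * (T - t)) /\
  (forall r, filterlim (fun t => u t r) (at_left T) (locally 0)) /\
  (exists C : R, 0 < C /\ forall t r, 0 <= t < T ->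
     / C * (exp (INR k * r) / (1 + exp (INR k * r)) ^ 2) * (T - t) < Derive_n (u t) 2 r /\
     Derive_n (u t) 2 r <= C * (exp (INR k * r) / (1 + exp (INR k * r)) ^ 2) * (T - t) /\
     Rabs (Derive_n (u t) 3 r) / Derive_n (u t) 2 r <= C).
Proof.
  intros T.
  assert (HK : 1 <= INR k) by (apply (le_INR 1); lia).
  assert (HNK : INR k + 1 <= INR n).
  { replace (INR k + 1) with (INR (k + 1)) by (rewrite plus_INR; simpl; ring). apply le_INR; lia. }
  assert (Hn1 : (1 <= n)%nat) by lia.
  set (N := INR n) in *. set (K := INR k) in *.
  assert (HT : 0 < T) by (unfold T; apply Rdiv_lt_0_compat; lra).
  assert (Ha0 : a0 = (N - K) * T) by (unfold T; field; lra).
  assert (Hb0 : b0 = (N + K) * T).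
  { unfold T. apply (Rmult_eq_reg_r (N - K)); [|lra]. rewrite <- hcase. field. lra. }
  assert (HS : forall t, 0 <= t < T ->
     smooth (u t) /\ u t 0 = 0 /\ (forall r, 0 < Derive (u t) r) /\ (forall r, 0 < Derive_n (u t) 2 r) /\
     filterlim (Derive (u t)) (Rbar_locally m_infty) (locally ((N - K) * (T - t))) /\
     filterlim (Derive (u t)) (Rbar_locally p_infty) (locally ((N + K) * (T - t))) /\
     continuity_eq n (u 0) (u t) t).
  { intros t Ht. destruct (hsol t Ht) as [[Hs [H0 [H1 [H2 [Hl1 [Hl2 _]]]]]] Hc].
    replace (a0 + (K - N) * t) with ((N - K) * (T - t)) in Hl1 by (rewrite Ha0; ring).
    replace (b0 - (K + N) * t) with ((N + K) * (T - t)) in Hl2 by (rewrite Hb0; ring).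
    repeat split; auto. }
  assert (P1 : forall t r, 0 <= t < T -> (N - K) * (T - t) < Derive (u t) r < (N + K) * (T - t)).
  { intros t r Ht. destruct (HS t Ht) as [Hs [_ [_ [H2 [Hl1 [Hl2 _]]]]]].
    apply between; auto. apply sm2; auto. }
  split; [exact P1|]. split.
  -
    intro r. apply filterlim_locally. intro eps.
    set (d := Rmin T (eps / ((N + K) * (Rabs r + 1)))).
    assert (Hd : 0 < d).
    { unfold d. apply Rmin_pos; auto. apply Rdiv_lt_0_compat; [apply cond_pos|].
      pose proof (Rabs_pos r). apply Rmult_lt_0_compat; lra. }
    exists (mkposreal d Hd). intros t Hball Hlt. simpl in Hball. change (Rabs (t - T) < d) in Hball.
    apply abs_lt in Hball.
    assert (Ht : 0 <= t < T) by (pose proof (Rmin_l T (eps / ((N + K) * (Rabs r + 1)))); fold d in H; lra).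
    destruct (HS t Ht) as [Hs [H0 [H1 _]]].
    change (Rabs (u t r - 0) < eps). rewrite Rminus_0_r.
    assert (X : Rabs (u t r - u t 0) <= Rabs ((N + K) * (T - t) * r - (N + K) * (T - t) * 0)).
    { apply (dom_all (u t) (fun x => (N + K) * (T - t) * x)). intro z. split; [apply sm1; auto|].
      split; [auto_derive; auto|]. rewrite Derive_scal, Derive_id.
      specialize (P1 t z Ht). rewrite Rabs_right by (specialize (H1 z); lra). lra. }
    rewrite H0, Rminus_0_r, Rmult_0_r, Rminus_0_r, Rabs_mult, (Rabs_right ((N + K) * (T - t))) in X by (apply Rle_ge, Rmult_le_pos; lra).
    assert (Hdd : d <= eps / ((N + K) * (Rabs r + 1))) by apply Rmin_r.
    assert (T - t < d) by lra.
    assert ((N + K) * (T - t) * Rabs r <= (N + K) * d * Rabs r).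
    { apply Rmult_le_compat_r; [apply Rabs_pos|]. apply Rmult_le_compat_l; lra. }
    assert ((N + K) * d * Rabs r <= (N + K) * (eps / ((N + K) * (Rabs r + 1))) * Rabs r).
    { apply Rmult_le_compat_r; [apply Rabs_pos|]. apply Rmult_le_compat_l; lra. }
    assert ((N + K) * (eps / ((N + K) * (Rabs r + 1))) * Rabs r < eps).
    { replace ((N + K) * (eps / ((N + K) * (Rabs r + 1))) * Rabs r) with (eps * (Rabs r / (Rabs r + 1)))
        by (field; pose proof (Rabs_pos r); split; lra).
      assert (Rabs r / (Rabs r + 1) < 1).
      { apply (Rmult_lt_reg_r (Rabs r + 1)); [pose proof (Rabs_pos r); lra|].
        replace (Rabs r / (Rabs r + 1) * (Rabs r + 1)) with (Rabs r) by (field; pose proof (Rabs_pos r); lra). lra. }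
      pose proof (cond_pos eps). nra. }
    lra.
  -
    assert (H0T : 0 <= 0 < T) by lra.
    destruct (hsol 0 H0T) as [[Hs0 [_ [Hp1 [Hp2 [Hl1 [Hl2 [phi [Hph [Hpa [Hpb [Hda [Hdb Heq]]]]]]]]]]]] _].
    destruct (profile N K T (a0 + (K - N) * 0) (b0 - (K + N) * 0) (u 0) phi HT ltac:(lra) HNK
      ltac:(rewrite Ha0; ring) ltac:(rewrite Hb0; ring) Hs0 Hp2 Hl1 Hl2 Hph Hpa Hpb Hda Hdb Heq)
      as [m1 [M1 [K3 [KF [KD [Hm1 [HM1 [HK3 [HKF [HKD Hprof]]]]]]]]]].
    set (Lq := ln ((N + K) / (N - K))).
    assert (HLq : 0 <= Lq).
    { unfold Lq. rewrite <- ln_1. apply ln_mono; [lra|].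
      apply (Rmult_le_reg_r (N - K)); [lra|]. replace ((N + K) / (N - K) * (N - K)) with (N + K) by (field; repeat split; lra). lra. }
    set (KE := N * ln 2 + 2 * KF + 1 + (N - 1) * Lq).
    assert (Hln2 : 0 < ln 2) by (rewrite <- ln_1; apply ln_increasing; lra).
    assert (HKE : 0 <= KE) by (unfold KE; assert (0 <= (N - 1) * Lq) by (apply Rmult_le_pos; lra); nra).
    set (eK := exp KE). assert (HeK : 1 <= eK) by (unfold eK; rewrite <- exp_0; apply exp_mono; lra).
    set (C := 1 + T * eK / m1 + eK * M1 / T + K3 + KD + 2 * N + K + (N - 1) * eK * M1 / (4 * T * (N - K))).
    assert (Q1 : 0 <= T * eK / m1) by (apply Rmult_le_pos; [nra|apply Rlt_le, Rinv_0_lt_compat; lra]).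
    assert (Q2 : 0 <= eK * M1 / T) by (apply Rmult_le_pos; [nra|apply Rlt_le, Rinv_0_lt_compat; lra]).
    assert (Q3 : 0 <= (N - 1) * eK * M1 / (4 * T * (N - K))).
    { apply Rmult_le_pos; [apply Rmult_le_pos; [|lra]; apply Rmult_le_pos; lra|].
      apply Rlt_le, Rinv_0_lt_compat. nra. }
    assert (HC : 0 < C) by (unfold C; lra).
    assert (CT : T * eK / m1 < C) by (unfold C; lra).
    assert (CM : eK * M1 / T <= C) by (unfold C; lra).
    exists C. split; auto. intros t r Ht.
    change (exp (K * r) / (1 + exp (K * r)) ^ 2) with (G (K * r)).
    pose proof (G_pos (K * r)) as Gp. pose proof (G_le (K * r)) as Gl.
    assert (HinvC : / C < m1 / (T * eK)).
    { assert (0 < T * eK / m1) by (apply Rdiv_lt_0_compat; nra).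
      replace (m1 / (T * eK)) with (/ (T * eK / m1)) by (field; split; lra).
      apply Rinv_lt_contravar; nra. }
    destruct (Req_dec t 0) as [->|Htn].
    + destruct (Hprof r) as [[A1 A2] [A3 _]]. rewrite Rminus_0_r.
      assert (P2 : 0 < Derive_n (u 0) 2 r) by apply Hp2.
      split; [|split].
      * assert (/ C * T < m1).
        { apply (Rmult_lt_compat_r T) in HinvC; auto.
          replace (m1 / (T * eK) * T) with (m1 / eK) in HinvC by (field; split; lra).
          assert (m1 / eK <= m1).
          { apply (Rmult_le_reg_r eK); [lra|]. replace (m1 / eK * eK) with m1 by (field; repeat split; lra). nra. }
          lra. }
        assert (/ C * G (K * r) * T < m1 * G (K * r)).
        { replace (/ C * G (K * r) * T) with (/ C * T * G (K * r)) by ring.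
          apply Rmult_lt_compat_r; auto. }
        lra.
      * assert (M1 <= C * T).
        { apply (Rmult_le_reg_r (/ T)); [apply Rinv_0_lt_compat; lra|].
          replace (C * T * / T) with C by (field; repeat split; lra). unfold C. unfold Rdiv in Q1, Q2 |- *.
          assert (M1 <= eK * M1) by nra. assert (M1 * / T <= eK * M1 * / T).
          { apply Rmult_le_compat_r; [apply Rlt_le, Rinv_0_lt_compat; lra|lra]. }
          lra. }
        assert (M1 * G (K * r) <= C * T * G (K * r)) by (apply Rmult_le_compat_r; lra).
        replace (C * G (K * r) * T) with (C * T * G (K * r)) by ring. lra.
      * apply (Rmult_le_reg_r (Derive_n (u 0) 2 r)); auto.
        replace (Rabs (Derive_n (u 0) 3 r) / Derive_n (u 0) 2 r * Derive_n (u 0) 2 r)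
          with (Rabs (Derive_n (u 0) 3 r)) by (field; repeat split; lra).
        assert (K3 <= C) by (unfold C; lra).
        assert (K3 * Derive_n (u 0) 2 r <= C * Derive_n (u 0) 2 r) by (apply Rmult_le_compat_r; lra).
        lra.
    + assert (Htp : 0 < t < T) by lra.
      destruct (HS t Ht) as [Hs [_ [Hy1 [Hy2 [Hly1 [Hly2 [c Hc]]]]]]].
      replace (a0 + (K - N) * 0) with ((N - K) * T) in Hl1 by (rewrite Ha0; ring).
      replace (b0 - (K + N) * 0) with ((N + K) * T) in Hl2 by (rewrite Hb0; ring).
      destruct (flow_est n N K T t c KF KD (u t) (u 0) eq_refl Hn1 HT ltac:(lra) HNK Htp Hs Hs0
        Hy1 Hy2 Hp1 Hp2 Hly1 Hly2 Hl1 Hl2 Hc (fun r => proj1 (proj2 (proj2 (Hprof r))))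
        (fun r => proj2 (proj2 (proj2 (Hprof r))))) as [Xi [Ph I3]].
      specialize (Xi r). specialize (Ph r). specialize (I3 r).
      destruct (Hprof r) as [[A1 A2] _].
      pose proof (P1 t r Ht) as By. pose proof (P1 0 r H0T) as Bp. rewrite Rminus_0_r in Bp.
      set (s := T - t) in *. assert (Hs_ : 0 < s) by (unfold s; lra).
      set (y := Derive (u t)) in *. set (p := Derive (u 0)) in *.
      set (y2 := Derive_n (u t) 2) in *. set (p2 := Derive_n (u 0) 2) in *.
      set (y3 := Derive_n (u t) 3) in *.
      assert (Hy : 0 < y r) by nra. assert (Hp : 0 < p r) by nra.
      assert (Hy2r : 0 < y2 r) by apply Hy2. assert (Hp2r : 0 < p2 r) by apply Hp2.
      assert (Hst : 0 < s / T) by (apply Rdiv_lt_0_compat; lra).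
      assert (LU : ln (y r / p r) <= Lq + ln (s / T)).
      { unfold Lq. rewrite <- ln_mult; [|apply Rdiv_lt_0_compat; lra|auto].
        apply ln_mono; [apply Rdiv_lt_0_compat; lra|].
        apply (Rmult_le_reg_r (p r * (N - K) * T)); [apply Rmult_lt_0_compat; [apply Rmult_lt_0_compat; lra| lra]|].
        replace (y r / p r * (p r * (N - K) * T)) with (y r * (N - K) * T) by (field; repeat split; lra).
        replace ((N + K) / (N - K) * (s / T) * (p r * (N - K) * T)) with ((N + K) * s * p r) by (field; repeat split; lra).
        assert (y r * ((N - K) * T) <= (N + K) * s * p r) by (apply Rle_trans with ((N + K) * s * ((N - K) * T)); nra).
        lra. }
      assert (LL : - Lq + ln (s / T) <= ln (y r / p r)).
      { unfold Lq. rewrite <- ln_Rinv; [|apply Rdiv_lt_0_compat; lra].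
        rewrite <- ln_mult; [|apply Rinv_0_lt_compat, Rdiv_lt_0_compat; lra|auto].
        apply ln_mono; [apply Rmult_lt_0_compat; [apply Rinv_0_lt_compat, Rdiv_lt_0_compat; lra|auto]|].
        apply (Rmult_le_reg_r (p r * (N + K) * T)); [apply Rmult_lt_0_compat; [apply Rmult_lt_0_compat; lra| lra]|].
        replace (y r / p r * (p r * (N + K) * T)) with (y r * (N + K) * T) by (field; repeat split; lra).
        replace (/ ((N + K) / (N - K)) * (s / T) * (p r * (N + K) * T)) with ((N - K) * s * p r) by (field; repeat split; lra).
        assert ((N - K) * s * p r <= y r * ((N + K) * T)).
        { apply Rle_trans with ((N - K) * s * ((N + K) * T)).
          - apply Rmult_le_compat_l; [apply Rmult_le_pos; lra|lra].
          - apply Rmult_le_compat_r; [apply Rmult_le_pos; lra|lra]. }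
        lra. }
      apply abs_le in Ph.
      assert (LR : Rabs (ln (y2 r / p2 r) - ln (s / T)) <= KE).
      { apply le_abs. unfold KE.
        assert ((N - 1) * ln (y r / p r) <= (N - 1) * (Lq + ln (s / T))) by (apply Rmult_le_compat_l; lra).
        assert ((N - 1) * (- Lq + ln (s / T)) <= (N - 1) * ln (y r / p r)) by (apply Rmult_le_compat_l; lra).
        split; nra. }
      apply abs_le in LR.
      assert (RU : y2 r / p2 r <= s / T * eK).
      { assert (E1 : exp (ln (s / T) + KE) = s / T * eK) by (unfold eK; rewrite exp_plus, exp_ln; auto).
        apply Rle_trans with (exp (ln (y2 r / p2 r))); [rewrite exp_ln; [lra|apply Rdiv_lt_0_compat; lra]|].
        rewrite <- E1. apply exp_mono; lra. }
      assert (RL : s / T * / eK <= y2 r / p2 r).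
      { assert (E1 : exp (ln (s / T) + - KE) = s / T * / eK) by (unfold eK; rewrite exp_plus, exp_ln, exp_Ropp; auto).
        apply Rle_trans with (exp (ln (y2 r / p2 r))); [|rewrite exp_ln; [lra|apply Rdiv_lt_0_compat; lra]].
        rewrite <- E1. apply exp_mono; lra. }
      assert (Y2U : y2 r <= s / T * eK * p2 r).
      { apply (Rmult_le_compat_r (p2 r)) in RU; [|lra]. replace (y2 r / p2 r * p2 r) with (y2 r) in RU by (field; repeat split; lra). exact RU. }
      assert (Y2L : s / T * / eK * p2 r <= y2 r).
      { apply (Rmult_le_compat_r (p2 r)) in RL; [|lra]. replace (y2 r / p2 r * p2 r) with (y2 r) in RL by (field; repeat split; lra). exact RL. }
      assert (Hes : 0 < s / T * eK) by (apply Rmult_lt_0_compat; lra).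
      assert (Hes' : 0 < s / T * / eK) by (apply Rmult_lt_0_compat; [lra|apply Rinv_0_lt_compat; lra]).
      split; [|split].
      * assert (s / T * / eK * (m1 * G (K * r)) <= s / T * / eK * p2 r) by (apply Rmult_le_compat_l; lra).
        assert (/ C * G (K * r) * s < s / T * / eK * (m1 * G (K * r))).
        { replace (s / T * / eK * (m1 * G (K * r))) with (m1 / (T * eK) * (G (K * r) * s)) by (field; split; lra).
          replace (/ C * G (K * r) * s) with (/ C * (G (K * r) * s)) by ring.
          apply Rmult_lt_compat_r; [nra|exact HinvC]. }
        lra.
      * assert (s / T * eK * p2 r <= s / T * eK * (M1 * G (K * r))) by (apply Rmult_le_compat_l; lra).
        assert (s / T * eK * (M1 * G (K * r)) <= C * G (K * r) * s).
        { replace (s / T * eK * (M1 * G (K * r))) with (eK * M1 / T * (G (K * r) * s)) by (field; repeat split; lra).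
          replace (C * G (K * r) * s) with (C * (G (K * r) * s)) by ring.
          apply Rmult_le_compat_r; [nra|exact CM]. }
        lra.
      * replace (Rabs (y3 r) / y2 r) with (Rabs (y3 r / y2 r)).
        2:{ unfold Rdiv. rewrite Rabs_mult, (Rabs_right (/ y2 r)); auto.
            apply Rle_ge, Rlt_le, Rinv_0_lt_compat; auto. }
        rewrite I3.
        assert (X1 : Rabs ((y r - s / T * p r) / t) <= KD).
        { set (A := y r - s / T * p r) in *.
          unfold Rdiv. rewrite Rabs_mult, (Rabs_right (/ t)) by (apply Rle_ge, Rlt_le, Rinv_0_lt_compat; lra).
          apply (Rmult_le_reg_r t); [lra|]. replace (Rabs A * / t * t) with (Rabs A) by (field; lra).
          lra. }
        assert (X2 : 0 < p r / T < N + K).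
        { split; [apply Rdiv_lt_0_compat; lra|]. apply (Rmult_lt_reg_r T); [lra|].
          replace (p r / T * T) with (p r) by (field; repeat split; lra). lra. }
        assert (X3 : y2 r / y r <= eK * M1 / (4 * T * (N - K))).
        { apply (Rmult_le_reg_r (y r)); auto. replace (y2 r / y r * y r) with (y2 r) by (field; repeat split; lra).
          assert (y2 r <= s / T * eK * (M1 * G (K * r))) by (eapply Rle_trans; [exact Y2U|]; apply Rmult_le_compat_l; lra).
          assert (s / T * eK * (M1 * G (K * r)) <= s / T * eK * (M1 * / 4)) by (apply Rmult_le_compat_l; [lra|]; apply Rmult_le_compat_l; lra).
          assert (s / T * eK * (M1 * / 4) = eK * M1 / (4 * T * (N - K)) * ((N - K) * s)) by (field; repeat split; lra).
          assert (eK * M1 / (4 * T * (N - K)) * ((N - K) * s) <= eK * M1 / (4 * T * (N - K)) * y r).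
          { apply Rmult_le_compat_l; [|lra]. apply Rmult_le_pos; [nra|]. apply Rlt_le, Rinv_0_lt_compat. nra. }
          lra. }
        assert (X4 : 0 <= y2 r / y r) by (apply Rlt_le, Rdiv_lt_0_compat; lra).
        assert (X5 : (N - 1) * (y2 r / y r) <= (N - 1) * eK * M1 / (4 * T * (N - K))).
        { replace ((N - 1) * eK * M1 / (4 * T * (N - K))) with ((N - 1) * (eK * M1 / (4 * T * (N - K)))) by (field; repeat split; lra).
          apply Rmult_le_compat_l; lra. }
        assert (X6 : 0 <= (N - 1) * (y2 r / y r)) by (apply Rmult_le_pos; lra).
        apply abs_le in X1. apply le_abs. unfold C. split; lra.
Qed.
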